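(* Let $M\subseteq H\subseteq F\subseteq\omega$ be $\Pi^1_1$ sets. Then there exists a computable function $g$ such that for every $p\in\omega$, $g(p)$ is an $\iota$-index of a c.e. effective quasi-Polish space $X=\iota(g(p))$ such that: $X$ is metrizable if $p\in M$; $X$ is Hausdorff but not metrizable if $p\in H\setminus M$; $X$ is $T_1$ but not Hausdorff if $p\in F\setminus H$; and $X$ is not $T_1$ if $p\notin F$.
   Context: Let $(W_n)$ be a standard numbering of c.e. subsets of $\omega$, $V_n=\{(i,j)\mid\langle i,j\rangle\in W_n\}$, and $t$ a computable function with $V_{t(n)}$ the transitive closure of $V_n$. For a transitive relation $\prec$ on $\omega$, an ideal is a non-empty lower, directed subset of $\omega$; $\mathcal{I}(\prec)$ is the space of ideals with topology generated by $[k]_\prec=\{I\mid k\in I\}$, an effective space with basic opens numbered by $k$. The numbering $\iota$ is defined by $\iota(n)=\mathcal{I}(V_{t(n)})$; an $\iota$-index of $X$ is an $n$ with $X=\iota(n)$. Every $\iota(n)$ is an effective quasi-Polish space; it is c.e. (overt) if $\{k\mid[k]_{V_{t(n)}}\neq\emptyset\}$ is c.e. *)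

(* Defs.v *)
From Stdlib Require Import Arith List Relations Reals.
Import ListNotations.

Definition cpair (x y : nat) : nat := (x + y) * (x + y + 1) / 2 + y.

Fixpoint seq_code (s : list nat) : nat :=
  match s with
  | [] => 0
  | x :: s' => S (cpair x (seq_code s'))
  end.

Definition restr (f : nat -> nat) (n : nat) : list nat := map f (seq 0 n).

Inductive recf : Type :=
| RZero : recf
| RSucc : recf
| RProj : nat -> recf
| RComp : recf -> list recf -> recf
| RPrec : recf -> recf -> recf
| RMin  : recf -> recf.

Inductive eval : recf -> list nat -> nat -> Prop :=
| ev_zero : forall v, eval RZero v 0
| ev_succ : forall v, eval RSucc v (S (hd 0 v))
| ev_proj : forall i v, eval (RProj i) v (nth i v 0)
| ev_comp : forall f gs v ys y,
    evals gs v ys -> eval f ys y -> eval (RComp f gs) v y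
| ev_prec0 : forall f g v y, eval f v y -> eval (RPrec f g) (0 :: v) y
| ev_precS : forall f g n v z y,
    eval (RPrec f g) (n :: v) z -> eval g (n :: z :: v) y ->
    eval (RPrec f g) (S n :: v) y
| ev_min : forall f v n,
    eval f (n :: v) 0 ->
    (forall m, m < n -> exists k, eval f (m :: v) (S k)) ->
    eval (RMin f) v n
with evals : list recf -> list nat -> list nat -> Prop :=
| evs_nil : forall v, evals [] v []
| evs_cons : forall g gs v y ys,
    eval g v y -> evals gs v ys -> evals (g :: gs) v (y :: ys).

Fixpoint enc (f : recf) : nat :=
  match f with
  | RZero => cpair 0 0
  | RSucc => cpair 1 0
  | RProj i => cpair 2 i
  | RComp f gs =>
      cpair 3 (cpair (enc f)
        ((fix encl (l : list recf) : nat :=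
            match l with [] => 0 | g :: l' => S (cpair (enc g) (encl l')) end) gs))
  | RPrec f g => cpair 4 (cpair (enc f) (enc g))
  | RMin f => cpair 5 (enc f)
  end.

(* phi_n(args) = y ; indices not coding a program give the empty function *)
Definition phi (n : nat) (args : list nat) (y : nat) : Prop :=
  exists c, enc c = n /\ eval c args y.

Definition W (n : nat) (x : nat) : Prop := exists y, phi n [x] y.

Definition computable (g : nat -> nat) : Prop :=
  exists e, forall p, phi e [p] (g p).

(* Pi^1_1 subsets of omega (Kleene normal form):
   A p <-> forall f, exists n, R(p, f|n), with R a computable (total) relation *)
Definition Pi11 (A : nat -> Prop) : Prop :=
  exists e,
    (forall p s, exists b, phi e [p; s] b) /\
    (forall p, A p <-> forall f : nat -> nat, exists n, phi e [p; seq_code (restr f n)] 0).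

Definition V (n : nat) (i j : nat) : Prop := W n (cpair i j).

Definition Vt (n : nat) : nat -> nat -> Prop := clos_trans nat (V n).

Definition is_ideal (R : nat -> nat -> Prop) (I : nat -> Prop) : Prop :=
  (exists k, I k) /\
  (forall i j, I j -> R i j -> I i) /\
  (forall i j, I i -> I j -> exists k, I k /\ R i k /\ R j k).

Definition same (I J : nat -> Prop) : Prop := forall k, I k <-> J k.

(* open sets of the topology on I(R) generated by the sets [k] = {I | k in I}:
   every point of U has a finite intersection of generators around it inside U *)
Definition is_open (R : nat -> nat -> Prop) (U : (nat -> Prop) -> Prop) : Prop :=
  forall I, is_ideal R I -> U I ->
    exists l : list nat, Forall I l /\
      (forall J, is_ideal R J -> Forall J l -> U J).

Definition T1 (R : nat -> nat -> Prop) : Prop :=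
  forall I J, is_ideal R I -> is_ideal R J -> ~ same I J ->
    exists U, is_open R U /\ U I /\ ~ U J.

Definition Hausdorff (R : nat -> nat -> Prop) : Prop :=
  forall I J, is_ideal R I -> is_ideal R J -> ~ same I J ->
    exists U U', is_open R U /\ is_open R U' /\ U I /\ U' J /\
      (forall K, is_ideal R K -> ~ (U K /\ U' K)).

Definition metrizable (R : nat -> nat -> Prop) : Prop :=
  exists d : (nat -> Prop) -> (nat -> Prop) -> Rdefinitions.R,
    (forall I J, is_ideal R I -> is_ideal R J ->
       (0 <= d I J)%R /\ (d I J = 0%R <-> same I J) /\ d I J = d J I) /\
    (forall I J K, is_ideal R I -> is_ideal R J -> is_ideal R K ->
       (d I K <= d I J + d J K)%R) /\
    (forall U, is_open R U <->
       (forall I, is_ideal R I -> U I ->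
          exists eps, (0 < eps)%R /\
            forall J, is_ideal R J -> (d I J < eps)%R -> U J)).

Definition ce_space (R : nat -> nat -> Prop) : Prop :=
  exists e, forall k, W e k <-> exists I, is_ideal R I /\ I k.

(* iota(n) = I(V_{t(n)}); the space is represented by its relation *)
Definition iota (n : nat) : nat -> nat -> Prop := Vt n.

(* Main.v *)
Require Import Defs.
From Stdlib Require Import Arith Lia List Classical ClassicalEpsilon FunctionalExtensionality PropExtensionality Relations Reals Lra.
Import ListNotations.

Fixpoint tri (n : nat) : nat := match n with 0 => 0 | S n' => tri n' + n end.

Lemma tri_double n : n * (n + 1) = tri n * 2.
Proof. induction n; simpl; [reflexivity|]. nia. Qed.

Lemma cpair_tri x y : cpair x y = tri (x + y) + y.
Proof. unfold cpair. rewrite tri_double, Nat.div_mul by lia. reflexivity. Qed.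

Lemma tri_mono a b : a <= b -> tri a <= tri b.
Proof. induction 1; simpl; lia. Qed.

Fixpoint dg (z : nat) : nat :=
  match z with
  | 0 => 0
  | S z' => if tri (S (dg z')) <=? S z' then S (dg z') else dg z'
  end.

Lemma dg_spec z : tri (dg z) <= z /\ z < tri (S (dg z)).
Proof.
  induction z; simpl; [lia|].
  destruct (Nat.leb_spec (tri (dg z) + S (dg z)) (S z)); simpl in *; lia.
Qed.

Lemma dg_unique d z : tri d <= z -> z < tri (S d) -> dg z = d.
Proof.
  intros H1 H2. destruct (dg_spec z) as [H3 H4].
  destruct (Nat.lt_trichotomy (dg z) d) as [H|[H|H]]; auto.
  - assert (tri (S (dg z)) <= tri d) by (apply tri_mono; lia). lia.
  - assert (tri (S d) <= tri (dg z)) by (apply tri_mono; lia). lia.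
Qed.

Definition py (z : nat) : nat := z - tri (dg z).
Definition px (z : nat) : nat := dg z - py z.

Lemma dg_cpair x y : dg (cpair x y) = x + y.
Proof. rewrite cpair_tri. apply dg_unique; simpl; lia. Qed.

Lemma py_cpair x y : py (cpair x y) = y.
Proof. unfold py. rewrite dg_cpair, cpair_tri. lia. Qed.

Lemma px_cpair x y : px (cpair x y) = x.
Proof. unfold px. rewrite py_cpair, dg_cpair. lia. Qed.

Lemma cpair_surj z : cpair (px z) (py z) = z.
Proof.
  destruct (dg_spec z) as [H1 H2]. simpl in H2.
  rewrite cpair_tri. unfold px, py.
  replace (dg z - (z - tri (dg z)) + (z - tri (dg z))) with (dg z) by lia. lia.
Qed.

Lemma cpair_inj x y x' y' : cpair x y = cpair x' y' -> x = x' /\ y = y'.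
Proof.
  intro H. split.
  - rewrite <- (px_cpair x y), <- (px_cpair x' y'). now rewrite H.
  - rewrite <- (py_cpair x y), <- (py_cpair x' y'). now rewrite H.
Qed.

Lemma cpair_ge_l x y : x <= cpair x y.
Proof. rewrite cpair_tri. assert (x + y <= tri (x+y)). { clear. induction (x+y); simpl; lia. } lia. Qed.
Lemma cpair_ge_r x y : y <= cpair x y.
Proof. rewrite cpair_tri. lia. Qed.
Lemma cpair_lt_l x y x' : x < x' -> cpair x y < cpair x' y.
Proof. intro. rewrite !cpair_tri. assert (tri (x+y) < tri (x'+y)).
  { assert (tri (S (x+y)) <= tri (x'+y)) by (apply tri_mono; lia). simpl in H0. lia. } lia. Qed.
Lemma cpair_lt_r x y y' : y < y' -> cpair x y < cpair x y'.
Proof. intro. rewrite !cpair_tri. assert (tri (x+y) <= tri (x+y')) by (apply tri_mono; lia). lia. Qed.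
Lemma cpair_le_l x y x' : x <= x' -> cpair x y <= cpair x' y.
Proof. intro H. destruct (Nat.eq_dec x x'); [subst; lia|]. apply Nat.lt_le_incl, cpair_lt_l; lia. Qed.
Lemma cpair_le_r x y y' : y <= y' -> cpair x y <= cpair x y'.
Proof. intro H. destruct (Nat.eq_dec y y'); [subst; lia|]. apply Nat.lt_le_incl, cpair_lt_r; lia. Qed.

Definition par (N : nat) : nat := py (pred N).
Definition lastx (N : nat) : nat := px (pred N).
Definition parn (k N : nat) : nat := Nat.iter k par N.

Inductive pre : nat -> nat -> Prop :=
| pre1 : forall x s, pre s (S (cpair x s))
| preS : forall x s t, pre s t -> pre s (S (cpair x t)).

Definition preq (s t : nat) : Prop := s = t \/ pre s t.

Lemma pre_lt s t : pre s t -> s < t.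
Proof. induction 1; [pose proof (cpair_ge_r x s)|pose proof (cpair_ge_r x t)]; lia. Qed.

Lemma pre_trans a b c : pre a b -> pre b c -> pre a c.
Proof. intros H1 H2. induction H2; [apply preS; auto| apply preS; auto]. Qed.

Lemma preq_trans a b c : preq a b -> preq b c -> preq a c.
Proof. unfold preq. intros [->|H1] [->|H2]; auto. right; eapply pre_trans; eauto. Qed.

Lemma pre_inv s x t : pre s (S (cpair x t)) -> preq s t.
Proof.
  intro H. inversion H; subst.
  - match goal with E : cpair _ _ = cpair _ _ |- _ => apply cpair_inj in E as [_ ->] end. left; reflexivity.
  - match goal with E : cpair _ _ = cpair _ _ |- _ => apply cpair_inj in E as [_ ->] end. right; assumption.
Qed.

Lemma pre_0 s : ~ pre s 0.
Proof. intro H; inversion H. Qed.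

Lemma node_decomp t : t <> 0 -> t = S (cpair (lastx t) (par t)).
Proof. intro. unfold lastx, par. rewrite cpair_surj. lia. Qed.

Lemma pre_par t : t <> 0 -> pre (par t) t.
Proof. intro H. rewrite (node_decomp t H) at 2. apply pre1. Qed.

Lemma par_0 : par 0 = 0.
Proof. reflexivity. Qed.

Lemma preq_0 t : preq 0 t.
Proof.
  induction t as [t IH] using (well_founded_induction lt_wf).
  destruct (Nat.eq_dec t 0) as [->|H]; [left; reflexivity|].
  pose proof (pre_par t H). pose proof (pre_lt _ _ H0).
  eapply preq_trans; [apply IH; eauto| right; eauto].
Qed.

Lemma pre_preq_par s t : pre s t <-> t <> 0 /\ preq s (par t).
Proof.
  split.
  - intro H. destruct t; [inversion H|]. split; [lia|].
    pose proof (node_decomp (S t)) as E. rewrite E in H by lia.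
    apply pre_inv in H. exact H.
  - intros [H1 H2]. destruct H2 as [->|H2]; [apply pre_par; auto|].
    eapply pre_trans; [exact H2|apply pre_par; auto].
Qed.

Lemma preq_parn s t : preq s t <-> exists k, k <= t /\ parn k t = s.
Proof.
  split.
  - intros [->|H]; [exists 0; split; [lia|reflexivity]|].
    induction H.
    + exists 1. split; [lia|]. unfold parn, par; cbn [Nat.iter pred]. apply py_cpair.
    + destruct IHpre as [k [Hk Hk']]. exists (S k). split.
      * pose proof (cpair_ge_r x t). lia.
      * unfold parn in *. rewrite Nat.iter_succ_r. unfold par at 2. cbn [pred]. rewrite py_cpair. exact Hk'.
  - intros [k [_ Hk]]. subst s. induction k as [|k IH] in t |- *; [left; reflexivity|].
    unfold parn. rewrite Nat.iter_succ_r. fold (parn k (par t)).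
    eapply preq_trans; [apply IH|].
    destruct (Nat.eq_dec t 0) as [->|H]; [left; reflexivity|right; apply pre_par; auto].
Qed.

Lemma pre_chain a b t : preq a t -> preq b t -> preq a b \/ preq b a.
Proof.
  intros Ha Hb. induction t as [t IH] using (well_founded_induction lt_wf).
  destruct Ha as [->|Ha]; [right; exact Hb|].
  destruct Hb as [->|Hb]; [left; right; exact Ha|].
  assert (t <> 0) by (intro; subst; inversion Ha).
  apply pre_preq_par in Ha as [_ Ha]. apply pre_preq_par in Hb as [_ Hb].
  eapply IH; eauto. apply pre_lt, pre_par; auto.
Qed.

Lemma preq_le s t : preq s t -> s <= t.
Proof. intros [->|H]; [lia|apply pre_lt in H; lia]. Qed.

Lemma pre_child s k : pre s k -> exists x, preq (S (cpair x s)) k.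
Proof.
  induction 1.
  - exists x. left; reflexivity.
  - destruct IHpre as [y Hy]. exists y. eapply preq_trans; [exact Hy| right; apply pre1].
Qed.

Definition rstep (z : nat) : nat :=
  if px z =? 0 then z else cpair (par (px z)) (S (cpair (lastx (px z)) (py z))).
Definition revc (N : nat) : nat := py (Nat.iter N rstep (cpair N 0)).

Lemma seq_code_len l : length l <= seq_code l.
Proof. induction l; simpl; [lia|]. pose proof (cpair_ge_r a (seq_code l)). lia. Qed.

Lemma rstep_nil b : rstep (cpair 0 b) = cpair 0 b.
Proof. unfold rstep. rewrite px_cpair. reflexivity. Qed.

Lemma rstep_cons x A b : rstep (cpair (S (cpair x A)) b) = cpair A (S (cpair x b)).
Proof. unfold rstep. rewrite px_cpair. cbn [Nat.eqb]. unfold par, lastx. cbn [pred].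
  rewrite py_cpair, px_cpair, py_cpair. reflexivity. Qed.

Lemma rstep_iter0 k b : Nat.iter k rstep (cpair 0 b) = cpair 0 b.
Proof. induction k; [reflexivity|]. rewrite Nat.iter_succ, IHk. apply rstep_nil. Qed.

Lemma rstep_iter A B k : length A <= k ->
  Nat.iter k rstep (cpair (seq_code A) (seq_code B)) = cpair 0 (seq_code (rev A ++ B)).
Proof.
  induction k as [|k IH] in A, B |- *; intro H.
  - destruct A; [reflexivity|simpl in H; lia].
  - rewrite Nat.iter_succ_r. destruct A as [|x A].
    + cbn [seq_code]. rewrite rstep_nil, rstep_iter0. reflexivity.
    + cbn [seq_code]. rewrite rstep_cons.
      change (S (cpair x (seq_code B))) with (seq_code (x :: B)).
      rewrite IH by (simpl in H; lia). simpl. rewrite <- app_assoc. reflexivity.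
Qed.

Lemma revc_rev l : revc (seq_code (rev l)) = seq_code l.
Proof.
  unfold revc. replace (cpair (seq_code (rev l)) 0) with (cpair (seq_code (rev l)) (seq_code [])) by reflexivity.
  rewrite (rstep_iter (rev l) []). - rewrite py_cpair, rev_involutive, app_nil_r. reflexivity.
  - apply seq_code_len.
Qed.

Definition alive (a : nat -> nat) (N : nat) : Prop := forall M, preq M N -> a (revc M) <> 0.
Definition Pt (a : nat -> nat) (s t : nat) : Prop := pre s t /\ alive a s /\ alive a t.

Lemma alive_preq a s t : preq s t -> alive a t -> alive a s.
Proof. intros H1 H2 M HM. apply H2. eapply preq_trans; eauto. Qed.

Definition nd (f : nat -> nat) (n : nat) : nat := seq_code (rev (restr f n)).

Lemma nd_S f n : nd f (S n) = S (cpair (f n) (nd f n)).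
Proof. unfold nd, restr. rewrite seq_S, map_app, rev_app_distr. reflexivity. Qed.

Lemma nd_0 f : nd f 0 = 0.
Proof. reflexivity. Qed.

Lemma preq_nd f n M : preq M (nd f n) -> exists m, m <= n /\ M = nd f m.
Proof.
  induction n; intro H.
  - rewrite nd_0 in H. destruct H as [->|H]; [exists 0; auto|inversion H].
  - rewrite nd_S in H. destruct H as [->|H]; [exists (S n); rewrite nd_S; auto|].
    apply pre_inv in H. destruct (IHn H) as [m [Hm ->]]. exists m; auto.
Qed.

Lemma pre_nd f n m : n < m -> pre (nd f n) (nd f m).
Proof.
  induction 1; rewrite nd_S; [apply pre1| apply preS; auto].
Qed.

Definition Pi11form (a : nat -> nat) : Prop := forall f : nat -> nat, exists n, a (seq_code (restr f n)) = 0.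

Lemma tree_link a : Pi11form a <-> ~ exists B, is_ideal (Pt a) B.
Proof.
  split.
  - intros HA [B [[s Hs] [Hlow Hdir]]].
    assert (Hnext : forall s, B s -> exists x, B (S (cpair x s))).
    { intros s0 Hs0. destruct (Hdir s0 s0 Hs0 Hs0) as [k [Hk [[Hp [Ha1 Ha2]] _]]].
      destruct (pre_child _ _ Hp) as [x Hx]. exists x.
      destruct Hx as [Hx|Hx]; [rewrite Hx; auto|].
      apply (Hlow _ k Hk). split; [auto|split; auto]. eapply alive_preq; [right; eauto|auto]. }
    assert (H0 : B 0).
    { destruct (Hnext s Hs) as [x Hx]. destruct (preq_0 s) as [<-|Hp]; auto.
      apply (Hlow 0 s Hs). destruct (Hdir s s Hs Hs) as [k [Hk [[_ [Ha _]] _]]].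
      split; [auto|split; auto]. eapply alive_preq; [apply preq_0|exact Ha]. }
    assert (Hc : forall s, exists x, B s -> B (S (cpair x s))).
    { intro s0. destruct (classic (B s0)) as [Hb|Hb].
      - destruct (Hnext s0 Hb) as [x Hx]; exists x; auto.
      - exists 0; tauto. }
    set (h := fun s0 => proj1_sig (constructive_indefinite_description _ (Hc s0))).
    assert (Hh : forall s0, B s0 -> B (S (cpair (h s0) s0))).
    { intros s0. unfold h. destruct (constructive_indefinite_description _ (Hc s0)); simpl; auto. }
    set (g := fix g n := match n with 0 => 0 | S n => S (cpair (h (g n)) (g n)) end).
    set (f := fun n => h (g n)).
    assert (Hg : forall n, g n = nd f n /\ B (g n)).
    { induction n; [split; [reflexivity|exact H0]|].
      destruct IHn as [E1 E2]. split.
      - rewrite nd_S. simpl. unfold f. rewrite E1. reflexivity.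
      - simpl. apply Hh. exact E2. }
    destruct (HA f) as [n Hn].
    destruct (Hg n) as [E Hb].
    destruct (Hdir _ _ Hb Hb) as [k [_ [[_ [Hal _]] _]]].
    apply (Hal (g n) (or_introl eq_refl)). rewrite E. unfold nd. rewrite revc_rev. exact Hn.
  - intros HB f. apply NNPP. intro Hn.
    assert (Hf : forall n, a (seq_code (restr f n)) <> 0).
    { intros n Hz. apply Hn. exists n. exact Hz. }
    assert (Hal : forall n, alive a (nd f n)).
    { intros n M HM. destruct (preq_nd f n M HM) as [m [_ ->]]. unfold nd. rewrite revc_rev. apply Hf. }
    apply HB. exists (fun M => exists n, M = nd f n). split; [|split].
    + exists (nd f 0), 0; reflexivity.
    + intros i j [n ->] [Hp _]. destruct (preq_nd f n i (or_intror Hp)) as [m [_ ->]]. exists m; reflexivity.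
    + intros i j [n ->] [m ->]. exists (nd f (S (max n m))). split; [eexists; reflexivity|].
      split; (split; [apply pre_nd; lia| split; apply Hal]).
Qed.

Definition transR (R : nat -> nat -> Prop) := forall x y z, R x y -> R y z -> R x z.

Lemma ideal_nonempty R I : is_ideal R I -> exists k, I k.
Proof. intros [H _]; exact H. Qed.
Lemma ideal_lower R I i j : is_ideal R I -> I j -> R i j -> I i.
Proof. intros [_ [H _]]; eauto. Qed.
Lemma ideal_dir R I i j : is_ideal R I -> I i -> I j -> exists k, I k /\ R i k /\ R j k.
Proof. intros [_ [_ H]]; eauto. Qed.
Lemma ideal_ub R I x : is_ideal R I -> I x -> exists y, I y /\ R x y.
Proof. intros HI Hx. destruct (ideal_dir R I x x HI Hx Hx) as [k [? [? _]]]; eauto. Qed.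

Lemma ideal_list R I l : transR R -> is_ideal R I -> Forall I l ->
  exists a, I a /\ Forall (fun x => R x a) l.
Proof.
  intros Ht HI. induction l as [|x l IH]; intro Hl.
  - destruct (ideal_nonempty R I HI) as [k Hk]. exists k; auto.
  - inversion Hl; subst. destruct (IH H2) as [a [Ha Hla]].
    destruct (ideal_dir R I x a HI H1 Ha) as [c [Hc [Hxc Hac]]].
    exists c. split; [exact Hc|]. constructor; [exact Hxc|].
    eapply Forall_impl; [|exact Hla]. intros y Hy. eapply Ht; [exact Hy|exact Hac].
Qed.

Lemma open_single R U I : transR R -> is_open R U -> is_ideal R I -> U I ->
  exists a, I a /\ forall J, is_ideal R J -> J a -> U J.
Proof.
  intros Ht HU HI HUI. destruct (HU I HI HUI) as [l [Hl HlU]].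
  destruct (ideal_list R I l Ht HI Hl) as [a [Ha Hla]].
  exists a. split; auto. intros J HJ HJa. apply HlU; auto.
  eapply Forall_impl; [|exact Hla]. intros y Hy. eapply ideal_lower; eauto.
Qed.

Lemma open_basic R a : is_open R (fun J => J a).
Proof. intros I HI Ha. exists [a]. split; [constructor; auto|]. intros J _ HJ. inversion HJ; auto. Qed.

Lemma open_up R U I J : is_open R U -> is_ideal R I -> is_ideal R J -> U I ->
  (forall k, I k -> J k) -> U J.
Proof.
  intros HU HI HJ HUI Hs. destruct (HU I HI HUI) as [l [Hl HlU]]. apply HlU; auto.
  eapply Forall_impl; [|exact Hl]. auto.
Qed.

Lemma principal R e : transR R -> R e e -> is_ideal R (fun z => R z e).
Proof.
  intros Ht He. split; [exists e; auto|split].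
  - intros i j Hj Hij. eapply Ht; eauto.
  - intros i j Hi Hj. exists e; auto.
Qed.

Lemma top_ideal R e I : transR R -> (forall y, R e y -> y = e) -> is_ideal R I -> I e ->
  forall z, I z <-> R z e.
Proof.
  intros Ht Htop HI He z. split.
  - intro Hz. destruct (ideal_dir R I z e HI Hz He) as [c [_ [H1 H2]]].
    apply Htop in H2. subst; auto.
  - intro H. eapply ideal_lower; eauto.
Qed.

Lemma unbounded R I : is_ideal R I -> (forall x, I x -> ~ R x x) ->
  (forall x y, R x y -> ~ R y y -> x < y) -> forall n, exists x, I x /\ n <= x.
Proof.
  intros HI Hl Hm n. induction n.
  - destruct (ideal_nonempty R I HI) as [k Hk]. exists k; split; auto; lia.
  - destruct IHn as [x [Hx Hn]]. destruct (ideal_ub R I x HI Hx) as [y [Hy Hxy]].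
    exists y. split; auto. specialize (Hm x y Hxy (Hl y Hy)). lia.
Qed.

Lemma T1_crit R : (forall I J, is_ideal R I -> is_ideal R J -> ~ same I J -> exists a, I a /\ ~ J a) -> T1 R.
Proof.
  intros H I J HI HJ Hs. destruct (H I J HI HJ Hs) as [a [Ha Hna]].
  exists (fun K => K a). split; [apply open_basic|auto].
Qed.

Lemma Haus_crit R : (forall I J, is_ideal R I -> is_ideal R J -> ~ same I J ->
   exists a b, I a /\ J b /\ ~ exists c, R a c /\ R b c) -> Hausdorff R.
Proof.
  intros H I J HI HJ Hs. destruct (H I J HI HJ Hs) as [a [b [Ha [Hb Hn]]]].
  exists (fun K => K a), (fun K => K b). split; [apply open_basic|]. split; [apply open_basic|].
  split; auto. split; auto. intros K HK [Ka Kb]. apply Hn.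
  destruct (ideal_dir R K a b HK Ka Kb) as [c [_ ?]]. eauto.
Qed.

Lemma notT1_crit R I J : is_ideal R I -> is_ideal R J -> (forall k, I k -> J k) -> ~ same I J -> ~ T1 R.
Proof.
  intros HI HJ Hs Hn HT. destruct (HT I J HI HJ Hn) as [U [HU [HUI HUJ]]].
  apply HUJ. exact (open_up R U I J HU HI HJ HUI Hs).
Qed.

Lemma notHaus_crit R I J : transR R -> is_ideal R I -> is_ideal R J -> ~ same I J ->
  (forall a b, I a -> J b -> exists K, is_ideal R K /\ K a /\ K b) -> ~ Hausdorff R.
Proof.
  intros Ht HI HJ Hn Hc HH. destruct (HH I J HI HJ Hn) as [U [U' [HU [HU' [HUI [HUJ Hd]]]]]].
  destruct (open_single R U I Ht HU HI HUI) as [a [Ha Ha']].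
  destruct (open_single R U' J Ht HU' HJ HUJ) as [b [Hb Hb']].
  destruct (Hc a b Ha Hb) as [K [HK [Ka Kb]]]. apply (Hd K HK). split; auto.
Qed.

Lemma least_ex (P : nat -> Prop) : (exists n, P n) -> exists n, P n /\ forall m, m < n -> ~ P m.
Proof.
  intros [n Hn]. induction n as [n IH] using (well_founded_induction lt_wf).
  destruct (classic (exists m, m < n /\ P m)) as [[m [Hm Hpm]]|Hno].
  - exact (IH m Hm Hpm).
  - exists n. split; auto. intros m Hm Hp. apply Hno; eauto.
Qed.

Definition invS (n : nat) : R := Rinv (INR (S n)).

Definition dis (T : nat -> Prop) (I J : nat -> Prop) (n : nat) : Prop := T n /\ ~ (I n <-> J n).

Definition dist (T : nat -> Prop) (I J : nat -> Prop) : R :=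
  match excluded_middle_informative (exists n, dis T I J n) with
  | left H => invS (proj1_sig (constructive_indefinite_description _ (least_ex _ H)))
  | right _ => 0%R
  end.

Lemma dist_cases T I J :
  ((~ exists n, dis T I J n) /\ dist T I J = 0%R) \/
  (exists m, dis T I J m /\ (forall k, k < m -> ~ dis T I J k) /\ dist T I J = invS (m)).
Proof.
  unfold dist. destruct (excluded_middle_informative _) as [H|H]; [right|left; auto].
  destruct (constructive_indefinite_description _ _) as [m [Hm1 Hm2]]; simpl.
  exists m; auto.
Qed.

Lemma invS_pos n : (0 < invS (n))%R.
Proof. unfold invS. apply Rinv_0_lt_compat, lt_0_INR; lia. Qed.

Lemma invS_lt n m : n < m -> (invS (m) < invS (n))%R.
Proof.
  intro H. unfold invS. apply Rinv_lt_contravar.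
  - apply Rmult_lt_0_compat; apply lt_0_INR; lia.
  - apply lt_INR; lia.
Qed.

Lemma invS_le n m : n <= m -> (invS (m) <= invS (n))%R.
Proof.
  intro H. destruct (Nat.eq_dec n m); [subst; lra|]. left; apply invS_lt; lia.
Qed.

Lemma dist_lt T I J n : (dist T I J < invS (n))%R <-> forall k, k <= n -> T k -> (I k <-> J k).
Proof.
  destruct (dist_cases T I J) as [[Hn ->]|[m [Hm [Hmin ->]]]].
  - split; [|intros; apply invS_pos]. intros _ k _ Tk. apply NNPP. intro Hk. apply Hn. exists k. split; auto.
  - split.
    + intros Hlt k Hk Tk. apply NNPP. intro Hd.
      assert (m <= k). { destruct (le_lt_dec m k); auto. exfalso. apply (Hmin k); auto. split; auto. }
      pose proof (invS_le m n ltac:(lia)). lra.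
    + intros Hag. destruct (le_lt_dec m n) as [Hle|Hlt].
      * exfalso. destruct Hm as [Tm Hd]. apply Hd. apply Hag; auto.
      * apply invS_lt; auto.
Qed.

Lemma dist_ge T I J n : dis T I J n -> (invS (n) <= dist T I J)%R.
Proof.
  intro Hd. destruct (Rlt_le_dec (dist T I J) (invS (n))) as [H|H]; auto.
  exfalso. rewrite dist_lt in H. destruct Hd as [Tn Hn]. apply Hn. apply H; auto.
Qed.

Lemma dist_nonneg T I J : (0 <= dist T I J)%R.
Proof. destruct (dist_cases T I J) as [[_ ->]|[m [_ [_ ->]]]]; [lra|left; apply invS_pos]. Qed.

Lemma dis_sym T I J n : dis T I J n <-> dis T J I n.
Proof. unfold dis. intuition. Qed.

Lemma dist_sym T I J : dist T I J = dist T J I.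
Proof.
  destruct (dist_cases T I J) as [[Hn ->]|[m [Hm [Hmin ->]]]];
  destruct (dist_cases T J I) as [[Hn' ->]|[m' [Hm' [Hmin' ->]]]]; auto.
  - exfalso; apply Hn; exists m'; apply dis_sym; auto.
  - exfalso; apply Hn'; exists m; apply dis_sym; auto.
  - assert (m = m').
    { destruct (Nat.lt_trichotomy m m') as [H|[H|H]]; auto; exfalso.
      - apply (Hmin' m H). apply dis_sym; auto.
      - apply (Hmin m' H). apply dis_sym; auto. }
    subst; auto.
Qed.

Lemma dist_tri T I J K : (dist T I K <= dist T I J + dist T J K)%R.
Proof.
  pose proof (dist_nonneg T I J). pose proof (dist_nonneg T J K).
  destruct (dist_cases T I K) as [[_ ->]|[m [[Tm Hm] [_ ->]]]]; [lra|].
  destruct (classic (I m <-> J m)) as [H1|H1].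
  - assert (dis T J K m) by (split; auto; intro; apply Hm; tauto).
    pose proof (dist_ge _ _ _ _ H2). lra.
  - assert (dis T I J m) by (split; auto).
    pose proof (dist_ge _ _ _ _ H2). lra.
Qed.

Lemma metrizable_crit R (T : nat -> Prop) : transR R ->
  (forall I k, is_ideal R I -> I k -> exists a, T a /\ I a /\ forall J, is_ideal R J -> J a -> J k) ->
  (forall I k, is_ideal R I -> T k -> ~ I k -> exists a, I a /\ forall J, is_ideal R J -> J a -> ~ J k) ->
  metrizable R.
Proof.
  intros Ht Q1 Q2. exists (dist T). split; [|split].
  - intros I J HI HJ. split; [apply dist_nonneg|split; [|apply dist_sym]].
    split.
    + intro H0. destruct (dist_cases T I J) as [[Hn _]|[m [_ [_ Hm]]]].
      * intro k. split.
        -- intro Ik. destruct (Q1 I k HI Ik) as [a [Ta [Ia Ha]]]. apply Ha; auto.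
           apply NNPP; intro. apply Hn. exists a. split; auto. tauto.
        -- intro Jk. destruct (Q1 J k HJ Jk) as [a [Ta [Ja Ha]]]. apply Ha; auto.
           apply NNPP; intro. apply Hn. exists a. split; auto. tauto.
      * pose proof (invS_pos m). lra.
    + intro Hs. destruct (dist_cases T I J) as [[_ H]|[m [[_ Hm] _]]]; auto.
      exfalso; apply Hm; apply Hs.
  - intros I J K _ _ _. apply dist_tri.
  - intro U. split.
    + intros HU I HI HUI. destruct (open_single R U I Ht HU HI HUI) as [a [Ia Ha]].
      destruct (Q1 I a HI Ia) as [b [Tb [Ib Hb]]].
      exists (invS (b))%R. split; [apply invS_pos|].
      intros J HJ Hd. apply Ha; auto. apply Hb; auto.
      rewrite dist_lt in Hd. apply (Hd b); auto.
    + intros HU I HI HUI. destruct (HU I HI HUI) as [eps [Heps Hball]].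
      destruct (archimed_cor1 eps Heps) as [N [HN HN0]].
      assert (Hl : forall n, exists l, Forall I l /\ forall J, is_ideal R J -> Forall J l ->
                 forall k, k <= n -> T k -> (I k <-> J k)).
      { induction n.
        - destruct (classic (I 0)) as [H0|H0].
          + exists [0]. split; [constructor; auto|]. intros J HJ Hl k Hk Tk.
            inversion Hl; subst. assert (k = 0) by lia. subst. tauto.
          + destruct (classic (T 0)) as [T0|T0].
            * destruct (Q2 I 0 HI T0 H0) as [a [Ia Ha]]. exists [a]. split; [constructor; auto|].
              intros J HJ Hl k Hk Tk. inversion Hl; subst. assert (k = 0) by lia. subst.
              specialize (Ha J HJ H2). tauto.
            * exists []. split; auto. intros J _ _ k Hk Tk. assert (k = 0) by lia. subst; tauto.
        - destruct IHn as [l [Hl Hl']].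
          destruct (classic (I (S n))) as [H0|H0].
          + exists (S n :: l). split; [constructor; auto|]. intros J HJ HJl k Hk Tk.
            inversion HJl; subst. destruct (Nat.eq_dec k (S n)); [subst; tauto|].
            apply Hl'; auto; lia.
          + destruct (classic (T (S n))) as [T0|T0].
            * destruct (Q2 I (S n) HI T0 H0) as [a [Ia Ha]]. exists (a :: l). split; [constructor; auto|].
              intros J HJ HJl k Hk Tk. inversion HJl; subst.
              destruct (Nat.eq_dec k (S n)); [subst; specialize (Ha J HJ H2); tauto|].
              apply Hl'; auto; lia.
            * exists l. split; auto. intros J HJ HJl k Hk Tk.
              destruct (Nat.eq_dec k (S n)); [subst; tauto|]. apply Hl'; auto; lia. }
      destruct (Hl N) as [l [Hl1 Hl2]]. exists l. split; auto.
      intros J HJ HJl. apply Hball; auto.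
      assert (dist T I J < invS (N))%R by (apply dist_lt; apply Hl2; auto).
      assert (invS (N) < / INR N)%R by (unfold invS; apply Rinv_lt_contravar; [apply Rmult_lt_0_compat; apply lt_0_INR; lia| apply lt_INR; lia]).
      lra.
Qed.

Definition el (t s m : nat) : nat := cpair t (cpair s m).
Lemma el_inj t s m t' s' m' : el t s m = el t' s' m' -> t = t' /\ s = s' /\ m = m'.
Proof. unfold el. intro H. apply cpair_inj in H as [-> H]. apply cpair_inj in H as [-> ->]. auto. Qed.
Lemma el_lt_m t s m m' : m < m' -> el t s m < el t s m'.
Proof. intro. unfold el. apply cpair_lt_r, cpair_lt_r; auto. Qed.
Lemma el_lt_s t s s' m : s < s' -> el t s m < el t s' m.
Proof. intro. unfold el. apply cpair_lt_r, cpair_lt_l; auto. Qed.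
Lemma el_le_m t s m m' : m <= m' -> el t s m <= el t s m'.
Proof. intro. unfold el. apply cpair_le_r, cpair_le_r; auto. Qed.
Lemma el_le_s t s s' m : s <= s' -> el t s m <= el t s' m.
Proof. intro. unfold el. apply cpair_le_r, cpair_le_l; auto. Qed.
Lemma el_ge_m t s m : m <= el t s m.
Proof. unfold el. pose proof (cpair_ge_r s m). pose proof (cpair_ge_r t (cpair s m)). lia. Qed.
Lemma el_ge_s t s m : s <= el t s m.
Proof. unfold el. pose proof (cpair_ge_l s m). pose proof (cpair_ge_r t (cpair s m)). lia. Qed.
Lemma el_surj x : x = el (px x) (px (py x)) (py (py x)).
Proof. unfold el. rewrite !cpair_surj. reflexivity. Qed.
Lemma px_el t s m : px (el t s m) = t.
Proof. unfold el. apply px_cpair. Qed.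
Lemma pxpy_el t s m : px (py (el t s m)) = s.
Proof. unfold el. rewrite py_cpair. apply px_cpair. Qed.
Lemma pypy_el t s m : py (py (el t s m)) = m.
Proof. unfold el. rewrite !py_cpair. reflexivity. Qed.
Global Opaque el.

Definition w8 : nat := el 8 0 0.

Inductive Rl (a1 a2 a3 : nat -> nat) : nat -> nat -> Prop :=
| r_e1 : forall s m, alive a1 s -> Rl a1 a2 a3 (el 0 s m) (el 0 s m)
| r_ff : forall s k k', alive a1 s -> k < k' -> Rl a1 a2 a3 (el 1 s k) (el 1 s k')
| r_fe : forall s k m, alive a1 s -> k <= m -> Rl a1 a2 a3 (el 1 s k) (el 0 s m)
| r_uu1 : forall s t, alive a1 t -> pre s t -> Rl a1 a2 a3 (el 2 s 0) (el 2 t 0)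
| r_ue1 : forall s t m, alive a1 t -> preq s t -> Rl a1 a2 a3 (el 2 s 0) (el 0 t m)
| r_e2 : forall s, alive a2 s -> Rl a1 a2 a3 (el 3 s 0) (el 3 s 0)
| r_uu2 : forall i s t, (i = 4 \/ i = 5) -> alive a2 t -> pre s t -> Rl a1 a2 a3 (el i s 0) (el i t 0)
| r_ue2 : forall i s t, (i = 4 \/ i = 5) -> alive a2 t -> preq s t -> Rl a1 a2 a3 (el i s 0) (el 3 t 0)
| r_e3 : forall s, alive a3 s -> Rl a1 a2 a3 (el 6 s 0) (el 6 s 0)
| r_uu3 : forall s t, alive a3 t -> pre s t -> Rl a1 a2 a3 (el 7 s 0) (el 7 t 0)
| r_ue3 : forall s t, alive a3 t -> preq s t -> Rl a1 a2 a3 (el 7 s 0) (el 6 t 0)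
| r_uw : forall s, alive a3 s -> Rl a1 a2 a3 (el 7 s 0) w8
| r_w : Rl a1 a2 a3 w8 w8.

Ltac elinj := repeat match goal with H : el _ _ _ = el _ _ _ |- _ =>
  apply el_inj in H; destruct H as [? [? ?]]; subst end.
Lemma pre_irrefl s : ~ pre s s.
Proof. intro H. apply pre_lt in H. lia. Qed.
Ltac clean := try match goal with H : pre ?s ?s |- _ => exfalso; exact (pre_irrefl s H) end.
Ltac rinv H := inversion H; subst; unfold w8 in *; elinj; try discriminate;
  try (exfalso; lia); clean.

Lemma pre_preq a b : pre a b -> preq a b.
Proof. right; auto. Qed.
Lemma pre_preq_trans a b c : pre a b -> preq b c -> pre a c.
Proof. intros H [<-|H']; auto. eapply pre_trans; eauto. Qed.
Lemma preq_pre_trans a b c : preq a b -> pre b c -> pre a c.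
Proof. intros [->|H] H'; auto. eapply pre_trans; eauto. Qed.
Lemma preq_refl a : preq a a.
Proof. left; auto. Qed.
Lemma alive_pre a s t : pre s t -> alive a t -> alive a s.
Proof. intros; eapply alive_preq; [right|]; eauto. Qed.
Create HintDb tree.
Hint Resolve alive_preq alive_pre pre_preq pre_preq_trans preq_pre_trans preq_refl preq_trans : tree.

Lemma Rl_trans a1 a2 a3 : transR (Rl a1 a2 a3).
Proof.
  intros x y z H1 H2.
  inversion H1; subst; inversion H2; subst; unfold w8 in *; elinj; try discriminate; try (exfalso; lia);
  try solve [econstructor; eauto with tree arith].
Qed.

Lemma Rl_top a1 a2 a3 e y : Rl a1 a2 a3 e e -> Rl a1 a2 a3 e y -> y = e.
Proof. intros H1 H2. inversion H1; subst; clean; rinv H2; auto. Qed.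


Lemma Rl_mono a1 a2 a3 x y : Rl a1 a2 a3 x y -> ~ Rl a1 a2 a3 y y -> x < y.
Proof.
  intros H Hn. inversion H; subst.
  all: try (exfalso; apply Hn; first [apply r_e1|apply r_e2|apply r_e3|apply r_w]; eauto with tree; fail).
  - apply el_lt_m; auto.
  - apply el_lt_s, pre_lt; auto.
  - apply el_lt_s, pre_lt; auto.
  - apply el_lt_s, pre_lt; auto.
Qed.

Lemma Rl_refl_ub a1 a2 a3 x y : Rl a1 a2 a3 x y -> exists e, Rl a1 a2 a3 x e /\ Rl a1 a2 a3 e e.
Proof.
  intro H. inversion H; subst.
  - exists (el 0 s m); split; apply r_e1; auto.
  - exists (el 0 s k'); split; [apply r_fe|apply r_e1]; auto; lia.
  - exists (el 0 s m); split; [apply r_fe|apply r_e1]; auto.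
  - exists (el 0 t 0); split; [apply r_ue1|apply r_e1]; eauto with tree.
  - exists (el 0 t m); split; [apply r_ue1|apply r_e1]; eauto with tree.
  - exists (el 3 s 0); split; apply r_e2; auto.
  - exists (el 3 t 0); split; [apply r_ue2|apply r_e2]; eauto with tree.
  - exists (el 3 t 0); split; [apply r_ue2|apply r_e2]; eauto with tree.
  - exists (el 6 s 0); split; apply r_e3; auto.
  - exists (el 6 t 0); split; [apply r_ue3|apply r_e3]; eauto with tree.
  - exists (el 6 t 0); split; [apply r_ue3|apply r_e3]; eauto with tree.
  - exists w8; split; [apply r_uw|apply r_w]; auto.
  - exists w8; split; apply r_w.
Qed.

Definition kind (x : nat) : nat * nat := (px x, if px x =? 1 then px (py x) else 0).
Lemma kind_el t s m : kind (el t s m) = (t, if t =? 1 then s else 0).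
Proof. unfold kind. rewrite px_el, pxpy_el. reflexivity. Qed.

Lemma Rl_kind a1 a2 a3 x y : Rl a1 a2 a3 x y -> ~ Rl a1 a2 a3 y y -> kind x = kind y.
Proof.
  intros H Hn. inversion H; subst;
  try (exfalso; apply Hn; first [apply r_e1|apply r_e2|apply r_e3|apply r_w]; eauto with tree; fail);
  rewrite !kind_el; try reflexivity.
  destruct H0 as [->| ->]; reflexivity.
Qed.

Ltac notrefl := first [apply r_e1; assumption|apply r_e2; assumption|apply r_e3; assumption|apply r_w].

Lemma Rl_chain a1 a2 a3 a b c : Rl a1 a2 a3 a c -> Rl a1 a2 a3 b c -> kind a = kind b ->
  ~ Rl a1 a2 a3 a a -> ~ Rl a1 a2 a3 b b -> c <> w8 ->
  a = b \/ Rl a1 a2 a3 a b \/ Rl a1 a2 a3 b a.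
Proof.
  intros Ha Hb Hk Hna Hnb Hc.
  inversion Ha; subst.
  all: try (exfalso; apply Hna; notrefl; fail).
  all: inversion Hb; subst.
  all: unfold w8 in *; elinj.
  all: try (exfalso; lia).
  all: clean.
  all: try (exfalso; apply Hnb; notrefl; fail).
  all: try (exfalso; apply Hc; reflexivity).
  all: rewrite ?kind_el in Hk.
  all: cbn [Nat.eqb] in Hk; try (injection Hk; intros; subst); try (exfalso; lia).
  all: try (destruct (lt_eq_lt_dec k k0) as [[h|h]|h];
       [right; left; apply r_ff| left; subst; reflexivity| right; right; apply r_ff]; auto; fail).
  all: repeat match goal with H : pre ?x ?y |- _ => apply pre_preq in H end.
  all: match goal with H1 : preq ?r ?t, H2 : preq ?r' ?t |- _ =>
         destruct (pre_chain r r' t H1 H2) as [[<-|h]|[<-|h]] end; try (left; reflexivity).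
  all: first [ right; left; first [apply r_uu1|apply r_uu2; [tauto| |]|apply r_uu3]; eauto with tree; fail
              | right; right; first [apply r_uu1|apply r_uu2; [tauto| |]|apply r_uu3]; eauto with tree; fail].
Qed.
Ltac bnd := first [ lia
  | match goal with H : ?k <= ?m |- el 1 ?s ?k <= _ => pose proof (el_le_m 1 s k m H); lia end
  | match goal with H : preq ?a ?b, H' : ?i = 4 \/ ?i = 5 |- _ => pose proof (el_le_s i a b 0 (preq_le _ _ H)); destruct H' as [-> | ->]; lia end
  | match goal with H : preq ?a ?b |- el ?t _ _ <= _ => pose proof (el_le_s t a b 0 (preq_le _ _ H)); lia end ].

Lemma Rl_bound a1 a2 a3 e : Rl a1 a2 a3 e e -> e <> w8 -> exists H, forall z, Rl a1 a2 a3 z e -> z <= H.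
Proof.
  intros He Hw. inversion He; subst; unfold w8 in *; elinj; try (exfalso; lia); clean; try (exfalso; apply Hw; reflexivity).
  - exists (el 0 s m + el 1 s m + el 2 s 0). intros z Hz. inversion Hz; subst; unfold w8 in *; elinj; try (exfalso; lia); clean; bnd.
  - exists (el 3 s 0 + el 4 s 0 + el 5 s 0). intros z Hz. inversion Hz; subst; unfold w8 in *; elinj; try (exfalso; lia); clean; bnd.
  - exists (el 6 s 0 + el 7 s 0). intros z Hz. inversion Hz; subst; unfold w8 in *; elinj; try (exfalso; lia); clean; bnd.
Qed.

Lemma Rl_transR a1 a2 a3 : transR (Rl a1 a2 a3).
Proof. apply Rl_trans. Qed.

Lemma prin a1 a2 a3 e : Rl a1 a2 a3 e e -> is_ideal (Rl a1 a2 a3) (fun z => Rl a1 a2 a3 z e).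
Proof. intro. apply principal; auto. apply Rl_trans. Qed.

Definition Yset (s : nat) (x : nat) : Prop := exists k, x = el 1 s k.
Definition Uset (t : nat) (B : nat -> Prop) (x : nat) : Prop := exists s, B s /\ x = el t s 0.

Lemma Y_ideal a1 a2 a3 s : alive a1 s -> is_ideal (Rl a1 a2 a3) (Yset s).
Proof.
  intro Ha. split; [|split].
  - exists (el 1 s 0), 0; reflexivity.
  - intros i j [k ->] H. rinv H. eexists; reflexivity.
  - intros i j [k ->] [k' ->]. exists (el 1 s (S (max k k'))). split; [eexists; reflexivity|].
    split; apply r_ff; auto; lia.
Qed.

Lemma Pideal_alive a B s : is_ideal (Pt a) B -> B s -> alive a s.
Proof. intros HB Hs. destruct (ideal_ub _ _ _ HB Hs) as [t [_ [_ [H _]]]]. exact H. Qed.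

Lemma U1_ideal a1 a2 a3 B : is_ideal (Pt a1) B -> is_ideal (Rl a1 a2 a3) (Uset 2 B).
Proof.
  intro HB. split; [|split].
  - destruct (ideal_nonempty _ _ HB) as [s Hs]. exists (el 2 s 0), s; auto.
  - intros i j [t [Ht ->]] H. rinv H. exists s; split; auto.
    eapply ideal_lower; eauto. split; auto. split; auto. eapply alive_pre; eauto.
  - intros i j [s [Hs ->]] [t [Ht ->]]. destruct (ideal_dir _ _ s t HB Hs Ht) as [c [Hc [[H1 [_ H2]] [H3 _]]]].
    exists (el 2 c 0). split; [exists c; auto|]. split; apply r_uu1; auto.
Qed.

Lemma U2_ideal a1 a2 a3 B i : (i = 4 \/ i = 5) -> is_ideal (Pt a2) B -> is_ideal (Rl a1 a2 a3) (Uset i B).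
Proof.
  intros Hi HB. split; [|split].
  - destruct (ideal_nonempty _ _ HB) as [s Hs]. exists (el i s 0), s; auto.
  - intros i' j [t [Ht ->]] H. inversion H; subst; unfold w8 in *; elinj; try (exfalso; lia); clean.
    exists s; split; auto.
    eapply ideal_lower; eauto. split; auto. split; auto. eapply alive_pre; eauto.
  - intros i' j [s [Hs ->]] [t [Ht ->]]. destruct (ideal_dir _ _ s t HB Hs Ht) as [c [Hc [[H1 [_ H2]] [H3 _]]]].
    exists (el i c 0). split; [exists c; auto|]. split; apply r_uu2; auto.
Qed.

Lemma U3_ideal a1 a2 a3 B : is_ideal (Pt a3) B -> is_ideal (Rl a1 a2 a3) (Uset 7 B).
Proof.
  intro HB. split; [|split].
  - destruct (ideal_nonempty _ _ HB) as [s Hs]. exists (el 7 s 0), s; auto.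
  - intros i j [t [Ht ->]] H. rinv H. exists s; split; auto.
    eapply ideal_lower; eauto. split; auto. split; auto. eapply alive_pre; eauto.
  - intros i j [s [Hs ->]] [t [Ht ->]]. destruct (ideal_dir _ _ s t HB Hs Ht) as [c [Hc [[H1 [_ H2]] [H3 _]]]].
    exists (el 7 c 0). split; [exists c; auto|]. split; apply r_uu3; auto.
Qed.

Definition limit (R : nat -> nat -> Prop) (I : nat -> Prop) : Prop := forall y, I y -> ~ R y y.

Lemma limit_form a1 a2 a3 I x : is_ideal (Rl a1 a2 a3) I -> limit (Rl a1 a2 a3) I -> I x ->
  (exists s k, x = el 1 s k /\ alive a1 s) \/ (exists s, x = el 2 s 0) \/
  (exists s i, (i = 4 \/ i = 5) /\ x = el i s 0) \/ (exists s, x = el 7 s 0).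
Proof.
  intros HI Hl Hx. destruct (ideal_ub _ _ _ HI Hx) as [y [Hy Hxy]].
  pose proof (Hl x Hx) as Hn.
  inversion Hxy; subst; try (exfalso; apply Hn; notrefl; fail).
  - left; eauto.
  - left; eauto.
  - right; left; eauto.
  - right; left; eauto.
  - right; right; left; eauto.
  - right; right; left; eauto.
  - right; right; right; eauto.
  - right; right; right; eauto.
  - right; right; right; eauto.
Qed.

Lemma lim_kind a1 a2 a3 I x y : is_ideal (Rl a1 a2 a3) I -> limit (Rl a1 a2 a3) I -> I x -> I y -> kind x = kind y.
Proof.
  intros HI Hl Hx Hy. destruct (ideal_dir _ _ x y HI Hx Hy) as [c [Hc [H1 H2]]].
  rewrite (Rl_kind _ _ _ _ _ H1 (Hl c Hc)), (Rl_kind _ _ _ _ _ H2 (Hl c Hc)). reflexivity.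
Qed.

Lemma lim_P1 a1 a2 a3 I s0 : is_ideal (Rl a1 a2 a3) I -> limit (Rl a1 a2 a3) I -> I (el 2 s0 0) ->
  is_ideal (Pt a1) (fun s => I (el 2 s 0)).
Proof.
  intros HI Hl H0. split; [exists s0; auto|split].
  - intros i j Hj [Hp [_ Ha]]. eapply ideal_lower; eauto. apply r_uu1; auto.
  - intros i j Hi Hj. destruct (ideal_dir _ _ _ _ HI Hi Hj) as [c [Hc [H1 H2]]].
    pose proof (Hl c Hc) as Hn.
    inversion H1; subst; unfold w8 in *; elinj; try (exfalso; lia); try (exfalso; apply Hn; notrefl; fail).
    all: inversion H2; subst; unfold w8 in *; elinj; try (exfalso; lia); clean.
    all: exists t; split; auto; split; (split; [auto|split; eauto with tree]).
Qed.

Lemma lim_P2 a1 a2 a3 I s0 i : is_ideal (Rl a1 a2 a3) I -> limit (Rl a1 a2 a3) I -> (i = 4 \/ i = 5) -> I (el i s0 0) ->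
  is_ideal (Pt a2) (fun s => I (el i s 0)).
Proof.
  intros HI Hl Hi H0. split; [exists s0; auto|split].
  - intros i' j Hj [Hp [_ Ha]]. eapply ideal_lower; eauto. apply r_uu2; auto.
  - intros i' j Hi' Hj. destruct (ideal_dir _ _ _ _ HI Hi' Hj) as [c [Hc [H1 H2]]].
    pose proof (Hl c Hc) as Hn.
    inversion H1; subst; unfold w8 in *; elinj; try (exfalso; lia); try (exfalso; apply Hn; notrefl; fail).
    all: inversion H2; subst; unfold w8 in *; elinj; try (exfalso; lia); clean.
    all: exists t; split; auto; split; (split; [auto|split; eauto with tree]).
Qed.

Lemma lim_P3 a1 a2 a3 I s0 : is_ideal (Rl a1 a2 a3) I -> limit (Rl a1 a2 a3) I -> I (el 7 s0 0) ->
  is_ideal (Pt a3) (fun s => I (el 7 s 0)).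
Proof.
  intros HI Hl H0. split; [exists s0; auto|split].
  - intros i j Hj [Hp [_ Ha]]. eapply ideal_lower; eauto. apply r_uu3; auto.
  - intros i j Hi Hj. destruct (ideal_dir _ _ _ _ HI Hi Hj) as [c [Hc [H1 H2]]].
    pose proof (Hl c Hc) as Hn.
    inversion H1; subst; unfold w8 in *; elinj; try (exfalso; lia); try (exfalso; apply Hn; notrefl; fail).
    all: inversion H2; subst; unfold w8 in *; elinj; try (exfalso; lia); clean.
    all: exists t; split; auto; split; (split; [auto|split; eauto with tree]).
Qed.

Lemma lim_unb a1 a2 a3 I : is_ideal (Rl a1 a2 a3) I -> limit (Rl a1 a2 a3) I -> forall n, exists x, I x /\ n <= x.
Proof. intros HI Hl. apply (unbounded _ _ HI Hl). intros; eapply Rl_mono; eauto. Qed.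

Lemma lim_Y a1 a2 a3 I s k : is_ideal (Rl a1 a2 a3) I -> limit (Rl a1 a2 a3) I -> I (el 1 s k) ->
  forall x, I x <-> Yset s x.
Proof.
  intros HI Hl Hk.
  assert (Hfw : forall x, I x -> Yset s x).
  { intros x Hx. pose proof (lim_kind _ _ _ _ _ _ HI Hl Hk Hx) as Hkd.
    destruct (limit_form _ _ _ _ _ HI Hl Hx) as [[s' [k' [-> _]]]|[[s' ->]|[[s' [i [Hi ->]]]|[s' ->]]]];
    rewrite !kind_el in Hkd; cbn [Nat.eqb] in Hkd.
    - injection Hkd; intros ->. exists k'; reflexivity.
    - injection Hkd; intros; lia.
    - destruct Hi as [-> | ->]; cbn [Nat.eqb] in Hkd; injection Hkd; intros; lia.
    - injection Hkd; intros; lia. }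
  assert (Has : alive a1 s).
  { destruct (limit_form _ _ _ _ _ HI Hl Hk) as [[s' [k' [E Ha]]]|[[s' E]|[[s' [i [Hi E]]]|[s' E]]]];
    apply el_inj in E; try lia. destruct E as [_ [-> _]]; auto. }
  intro x. split; [apply Hfw|]. intros [k' ->].
  destruct (lim_unb _ _ _ _ HI Hl (el 1 s k')) as [z [Hz Hle]].
  destruct (Hfw z Hz) as [k'' ->].
  destruct (lt_eq_lt_dec k' k'') as [[h|<-]|h]; auto.
  - eapply ideal_lower; eauto. apply r_ff; auto.
  - pose proof (el_lt_m 1 s k'' k' h). lia.
Qed.

Lemma up_f a1 a2 a3 s k c : Rl a1 a2 a3 (el 1 s k) c -> exists t m, c = el t s m /\ (t = 0 \/ t = 1).
Proof. intro H. rinv H; eauto. Qed.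

Lemma refl_tag a1 a2 a3 e : Rl a1 a2 a3 e e -> px e = 0 \/ px e = 3 \/ px e = 6 \/ px e = 8.
Proof. intro H. inversion H; subst; unfold w8 in *; elinj; clean; rewrite ?px_el; lia. Qed.

Lemma Rl_top' a1 a2 a3 e y : Rl a1 a2 a3 e e -> Rl a1 a2 a3 e y -> y = e.
Proof. apply Rl_top. Qed.

Lemma top_set a1 a2 a3 I e : is_ideal (Rl a1 a2 a3) I -> I e -> Rl a1 a2 a3 e e -> forall z, I z <-> Rl a1 a2 a3 z e.
Proof.
  intros HI He Hr. apply top_ideal; auto. apply Rl_trans. intros y Hy; eapply Rl_top; eauto.
Qed.

Definition NoP (a : nat -> nat) : Prop := ~ exists B, is_ideal (Pt a) B.

Lemma incomp a1 a2 a3 I J : NoP a3 -> is_ideal (Rl a1 a2 a3) I -> is_ideal (Rl a1 a2 a3) J ->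
  (forall k, I k -> J k) -> forall k, J k -> I k.
Proof.
  intros HN HI HJ Hs.
  destruct (classic (exists e, J e /\ Rl a1 a2 a3 e e)) as [[e [Je Re]]|Hlim].
  - pose proof (top_set _ _ _ _ _ HJ Je Re) as HJe.
    destruct (classic (I e)) as [Ie|Ie].
    + pose proof (top_set _ _ _ _ _ HI Ie Re) as HIe. intros k Hk. apply HIe, HJe, Hk.
    + exfalso.
      assert (Hl : limit (Rl a1 a2 a3) I).
      { intros y Hy Ry. apply Ie. assert (Rl a1 a2 a3 y e) by (apply HJe, Hs, Hy).
        pose proof (Rl_top _ _ _ _ _ Ry H) as E. rewrite E. exact Hy. }
      destruct (Nat.eq_dec e w8) as [->|Hw].
      * destruct (ideal_nonempty _ _ HI) as [x Hx].
        assert (Rx : Rl a1 a2 a3 x w8) by (apply HJe, Hs, Hx).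
        inversion Rx; subst; unfold w8 in *; elinj; try lia.
        -- apply HN. exists (fun s => I (el 7 s 0)). exact (lim_P3 _ _ _ I s HI Hl Hx).
        -- exact (Ie Hx).
      * destruct (Rl_bound _ _ _ _ Re Hw) as [H HH].
        destruct (lim_unb _ _ _ _ HI Hl (S H)) as [x [Hx Hxl]].
        specialize (HH x (proj1 (HJe x) (Hs x Hx))). lia.
  - assert (HlJ : limit (Rl a1 a2 a3) J) by (intros y Hy Ry; apply Hlim; eauto).
    assert (HlI : limit (Rl a1 a2 a3) I) by (intros y Hy Ry; apply (HlJ y); auto).
    intros x Hx. destruct (lim_unb _ _ _ _ HI HlI x) as [y [Hy Hxy]].
    destruct (ideal_dir _ _ x y HJ Hx (Hs y Hy)) as [c [Hc [H1 H2]]].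
    assert (Hcw : c <> w8) by (intro; subst; apply (HlJ _ Hc); apply r_w).
    destruct (Rl_chain _ _ _ _ _ _ H1 H2 (lim_kind _ _ _ _ _ _ HJ HlJ Hx (Hs y Hy)) (HlJ x Hx) (HlJ y (Hs y Hy)) Hcw)
      as [->|[Hr|Hr]]; auto.
    + eapply ideal_lower; eauto.
    + pose proof (Rl_mono _ _ _ _ _ Hr (HlJ x Hx)). lia.
Qed.

Theorem Rl_T1 a1 a2 a3 : NoP a3 -> T1 (Rl a1 a2 a3).
Proof.
  intro HN. apply T1_crit. intros I J HI HJ Hs. apply NNPP. intro H.
  assert (Hsub : forall k, I k -> J k) by (intros k Ik; apply NNPP; intro; apply H; eauto).
  apply Hs. intro k. split; [apply Hsub|]. eapply incomp; eauto.
Qed.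

Definition sepp (R : nat -> nat -> Prop) (I J : nat -> Prop) : Prop :=
  exists a b, I a /\ J b /\ ~ exists c, R a c /\ R b c.

Lemma sepp_sym R I J : sepp R I J -> sepp R J I.
Proof. intros [a [b [Ha [Hb Hn]]]]. exists b, a. split; auto. split; auto. intros [c [H1 H2]]; apply Hn; eauto. Qed.

Lemma HS_refl a1 a2 a3 I J e : NoP a3 -> is_ideal (Rl a1 a2 a3) I -> is_ideal (Rl a1 a2 a3) J -> ~ same I J ->
  I e -> Rl a1 a2 a3 e e -> sepp (Rl a1 a2 a3) I J.
Proof.
  intros HN HI HJ Hs Ie Re. pose proof (top_set _ _ _ _ _ HI Ie Re) as HIe.
  assert (Hb : exists b, J b /\ ~ Rl a1 a2 a3 b e).
  { apply NNPP. intro Hn. apply Hs.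
    assert (HJI : forall k, J k -> I k).
    { intros k Hk. apply HIe. apply NNPP. intro. apply Hn. eauto. }
    intro k. split; [|apply HJI]. eapply incomp; eauto. }
  destruct Hb as [b [Jb Hb]]. exists e, b. split; auto. split; auto.
  intros [c [H1 H2]]. pose proof (Rl_top _ _ _ _ _ Re H1). subst. auto.
Qed.

Lemma form_u a1 a2 a3 I x : is_ideal (Rl a1 a2 a3) I -> limit (Rl a1 a2 a3) I -> NoP a2 -> NoP a3 -> I x ->
  (exists s k, x = el 1 s k /\ alive a1 s) \/ (exists s, x = el 2 s 0).
Proof.
  intros HI Hl H2 H3 Hx.
  destruct (limit_form _ _ _ _ _ HI Hl Hx) as [H|[H|[[s [i [Hi ->]]]|[s ->]]]]; auto; exfalso.
  - apply H2. eexists. eapply lim_P2; eauto.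
  - apply H3. eexists. eapply lim_P3; eauto.
Qed.

Lemma HS_mixed a1 a2 a3 I J s k r : is_ideal (Rl a1 a2 a3) I -> limit (Rl a1 a2 a3) I ->
  is_ideal (Rl a1 a2 a3) J -> limit (Rl a1 a2 a3) J -> NoP a2 -> NoP a3 ->
  I (el 1 s k) -> J (el 2 r 0) -> sepp (Rl a1 a2 a3) I J.
Proof.
  intros HI Hl HJ HlJ H2 H3 Hx Hy.
  destruct (lim_unb _ _ _ _ HJ HlJ (S (el 2 s 0))) as [z [Hz Hzl]].
  pose proof (lim_kind _ _ _ _ _ _ HJ HlJ Hy Hz) as Hk.
  destruct (form_u _ _ _ _ _ HJ HlJ H2 H3 Hz) as [[s' [k' [-> _]]]|[r' ->]].
  - rewrite !kind_el in Hk; cbn [Nat.eqb] in Hk. injection Hk; intros; lia.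
  - exists (el 1 s k), (el 2 r' 0). split; auto. split; auto.
    intros [c [H1 H4]]. destruct (up_f _ _ _ _ _ _ H1) as [t [m [-> Ht]]].
    destruct Ht as [-> | ->]; rinv H4.
    match goal with H : preq r' s |- _ => pose proof (el_le_s 2 r' s 0 (preq_le _ _ H)) end. lia.
Qed.

Theorem Rl_Haus a1 a2 a3 : NoP a2 -> NoP a3 -> Hausdorff (Rl a1 a2 a3).
Proof.
  intros H2 H3. apply Haus_crit. intros I J HI HJ Hs. fold (sepp (Rl a1 a2 a3) I J).
  destruct (classic (exists e, I e /\ Rl a1 a2 a3 e e)) as [[e [Ie Re]]|HlI'].
  { eapply HS_refl; eauto. }
  destruct (classic (exists e, J e /\ Rl a1 a2 a3 e e)) as [[e [Je Re]]|HlJ'].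
  { apply sepp_sym. eapply HS_refl; eauto. intro H; apply Hs. intro k; symmetry; apply H. }
  assert (HlI : limit (Rl a1 a2 a3) I) by (intros y Hy Ry; apply HlI'; eauto).
  assert (HlJ : limit (Rl a1 a2 a3) J) by (intros y Hy Ry; apply HlJ'; eauto).
  destruct (ideal_nonempty _ _ HI) as [x Hx]. destruct (ideal_nonempty _ _ HJ) as [y Hy].
  assert (Hsame : kind x = kind y -> sepp (Rl a1 a2 a3) I J).
  { intro Hk.
    assert (Ha : exists a, I a /\ ~ J a).
    { apply NNPP; intro Hn. apply Hs. intro k. split.
      - intro Ik. apply NNPP. intro. apply Hn. eauto.
      - eapply incomp; eauto. intros k' Ik'. apply NNPP. intro. apply Hn. eauto. }
    assert (Hb : exists b, J b /\ ~ I b).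
    { apply NNPP; intro Hn. apply Hs. intro k. split.
      - eapply incomp; eauto. intros k' Jk'. apply NNPP. intro. apply Hn. eauto.
      - intro Jk. apply NNPP. intro. apply Hn. eauto. }
    destruct Ha as [a [Ia Ja]]. destruct Hb as [b [Jb Ib]].
    exists a, b. split; auto. split; auto. intros [c [H1 H4]].
    destruct (Nat.eq_dec c w8) as [->|Hcw].
    - inversion H1; subst; unfold w8 in *; elinj; try lia.
      + apply H3. match goal with Ia : I (el 7 ?s 0) |- _ => exists (fun s => I (el 7 s 0)); exact (lim_P3 _ _ _ I s HI HlI Ia) end.
      + apply (HlI _ Ia). apply r_w.
    - assert (kind a = kind b).
      { rewrite (lim_kind _ _ _ _ _ _ HI HlI Ia Hx), Hk. apply (lim_kind _ _ _ _ _ _ HJ HlJ Hy Jb). }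
      destruct (Rl_chain _ _ _ _ _ _ H1 H4 H (HlI a Ia) (HlJ b Jb) Hcw) as [->|[Hr|Hr]].
      + auto.
      + apply Ja. eapply ideal_lower; eauto.
      + apply Ib. eapply ideal_lower; eauto. }
  destruct (form_u _ _ _ _ _ HI HlI H2 H3 Hx) as [[s [k [-> _]]]|[r ->]];
  destruct (form_u _ _ _ _ _ HJ HlJ H2 H3 Hy) as [[s' [k' [-> _]]]|[r' ->]].
  - destruct (Nat.eq_dec s s') as [<-|Hss].
    + apply Hsame. rewrite !kind_el. reflexivity.
    + exists (el 1 s k), (el 1 s' k'). split; auto. split; auto. intros [c [H1 H4]].
      destruct (up_f _ _ _ _ _ _ H1) as [t [m [-> _]]].
      destruct (up_f _ _ _ _ _ _ H4) as [t' [m' [E _]]]. apply el_inj in E. lia.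
  - eapply HS_mixed; eauto.
  - apply sepp_sym. eapply HS_mixed; eauto.
  - apply Hsame. rewrite !kind_el. reflexivity.
Qed.

Theorem Rl_notT1 a1 a2 a3 : ~ NoP a3 -> ~ T1 (Rl a1 a2 a3).
Proof.
  intro H. apply NNPP in H. destruct H as [B HB].
  apply (notT1_crit _ (Uset 7 B) (fun z => Rl a1 a2 a3 z w8)).
  - apply U3_ideal; auto.
  - apply prin, r_w.
  - intros k [s [Hs ->]]. apply r_uw. eapply Pideal_alive; eauto.
  - intro Hs. destruct (proj2 (Hs w8) (r_w a1 a2 a3)) as [s [_ E]]. unfold w8 in E. apply el_inj in E. lia.
Qed.

Theorem Rl_notHaus a1 a2 a3 : ~ NoP a2 -> ~ Hausdorff (Rl a1 a2 a3).
Proof.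
  intro H. apply NNPP in H. destruct H as [B HB].
  destruct (ideal_nonempty _ _ HB) as [s0 Hs0].
  apply (notHaus_crit _ (Uset 4 B) (Uset 5 B)).
  - apply Rl_trans.
  - apply U2_ideal; auto.
  - apply U2_ideal; auto.
  - intro Hs. destruct (proj1 (Hs (el 4 s0 0)) (ex_intro _ s0 (conj Hs0 eq_refl))) as [s [_ E]].
    apply el_inj in E. lia.
  - intros a b [s [Hs ->]] [t [Ht ->]].
    destruct (ideal_dir _ _ s t HB Hs Ht) as [c [Hc [[H1 [_ H2]] [H3 _]]]].
    exists (fun z => Rl a1 a2 a3 z (el 3 c 0)). split; [apply prin, r_e2; auto|].
    split; apply r_ue2; auto; right; auto.
Qed.


Theorem Rl_notmetr a1 a2 a3 : ~ NoP a1 -> ~ metrizable (Rl a1 a2 a3).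
Proof.
  intros H [d [Hd1 [Hd2 Hd3]]]. apply NNPP in H. destruct H as [B HB].
  assert (Hball : forall X r, is_ideal (Rl a1 a2 a3) X -> is_open (Rl a1 a2 a3) (fun K => (d X K < r)%R)).
  { intros X r HX. apply Hd3. intros I HI HIr. exists (r - d X I)%R. split; [lra|].
    intros J HJ HJd. pose proof (Hd2 X I J HX HI HJ). lra. }
  assert (Hself : forall X, is_ideal (Rl a1 a2 a3) X -> d X X = 0%R).
  { intros X HX. apply (Hd1 X X HX HX). intro; tauto. }
  pose proof (U1_ideal a1 a2 a3 B HB) as Hb.
  destruct (ideal_nonempty _ _ HB) as [s0 Hs0].
  destruct (proj1 (Hd3 (fun K => K (el 2 s0 0))) (open_basic _ _) (Uset 2 B) Hb (ex_intro _ s0 (conj Hs0 eq_refl)))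
    as [eps [Heps Hfar]].
  destruct (open_single _ _ (Uset 2 B) (Rl_trans a1 a2 a3) (Hball (Uset 2 B) (eps/2)%R Hb) Hb)
    as [a [[s [Hs ->]] Ha]].
  { rewrite Hself; auto. lra. }
  destruct (ideal_ub _ _ _ HB Hs) as [t [Ht [Hp [_ Hal]]]].
  pose proof (Y_ideal a1 a2 a3 t Hal) as HY.
  destruct (open_single _ _ (Yset t) (Rl_trans a1 a2 a3) (Hball (Yset t) (eps/2)%R HY) HY)
    as [a' [[k ->] Ha']].
  { rewrite Hself; auto. lra. }
  assert (HZ : is_ideal (Rl a1 a2 a3) (fun z => Rl a1 a2 a3 z (el 0 t k))) by (apply prin, r_e1; auto).
  pose proof (Ha _ HZ (r_ue1 _ _ _ s t k Hal (or_intror Hp))) as D1.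
  pose proof (Ha' _ HZ (r_fe _ _ _ t k k Hal (le_n k))) as D2.
  pose proof (Hd2 _ _ _ Hb HZ HY) as D3.
  destruct (Hd1 _ _ HY HZ) as [_ [_ D4]].
  assert (Hlt : (d (Uset 2 B) (Yset t) < eps)%R) by lra.
  destruct (Hfar _ HY Hlt) as [k' E]. apply el_inj in E. lia.
Qed.

Theorem Rl_metr a1 a2 a3 : NoP a1 -> NoP a2 -> NoP a3 -> metrizable (Rl a1 a2 a3).
Proof.
  intros N1 N2 N3.
  apply (metrizable_crit _ (fun x => ~ (px x = 2 \/ px x = 4 \/ px x = 5 \/ px x = 7))).
  - apply Rl_trans.
  - intros I k HI Ik.
    destruct (classic (exists e, I e /\ Rl a1 a2 a3 e e)) as [[e [Ie Re]]|Hn].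
    + exists e. split; [pose proof (refl_tag _ _ _ _ Re); lia|]. split; auto.
      intros J HJ Je. apply (top_set _ _ _ _ _ HJ Je Re). apply (top_set _ _ _ _ _ HI Ie Re). auto.
    + assert (Hl : limit (Rl a1 a2 a3) I) by (intros y Hy Ry; apply Hn; eauto).
      destruct (form_u _ _ _ _ _ HI Hl N2 N3 Ik) as [[s [k' [-> _]]]|[s ->]].
      * exists (el 1 s k'). rewrite px_el. split; [lia|]. split; auto.
      * exfalso. apply N1. eexists. eapply lim_P1; eauto.
  - intros I k HI Tk nIk.
    destruct (classic (exists e, I e /\ Rl a1 a2 a3 e e)) as [[e [Ie Re]]|Hn].
    + exists e. split; auto. intros J HJ Je Jk. apply nIk.
      apply (top_set _ _ _ _ _ HI Ie Re). apply (top_set _ _ _ _ _ HJ Je Re). auto.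
    + assert (Hl : limit (Rl a1 a2 a3) I) by (intros y Hy Ry; apply Hn; eauto).
      destruct (ideal_nonempty _ _ HI) as [x Hx].
      destruct (form_u _ _ _ _ _ HI Hl N2 N3 Hx) as [[s [k0 [-> _]]]|[s ->]].
      2: { exfalso. apply N1. eexists. eapply lim_P1; eauto. }
      pose proof (lim_Y _ _ _ _ _ _ HI Hl Hx) as HY.
      exists (el 1 s (S k)). split; [apply HY; eexists; reflexivity|].
      intros J HJ Ja Jk. destruct (ideal_dir _ _ _ _ HJ Ja Jk) as [c [Hc [H1 H2]]].
      destruct (up_f _ _ _ _ _ _ H1) as [t [m [-> [-> | ->]]]].
      * rinv H1. rinv H2.
        -- pose proof (el_ge_m 0 s m). lia.
        -- apply nIk, HY. eexists; reflexivity.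
        -- rewrite px_el in Tk. lia.
      * rinv H2. apply nIk, HY. eexists; reflexivity.
Qed.

Lemma Rl_ce a1 a2 a3 k : (exists I, is_ideal (Rl a1 a2 a3) I /\ I k) <-> exists y, Rl a1 a2 a3 k y.
Proof.
  split.
  - intros [I [HI Ik]]. destruct (ideal_ub _ _ _ HI Ik) as [y [_ H]]. eauto.
  - intros [y Hy]. destruct (Rl_refl_ub _ _ _ _ _ Hy) as [e [H1 H2]].
    exists (fun z => Rl a1 a2 a3 z e). split; auto. apply prin; auto.
Qed.

Record prog := mkP { pc : recf ; pf : list nat -> nat ; pok : forall v, eval pc v (pf v) }.

Definition p_proj (i : nat) : prog := mkP (RProj i) (fun v => nth i v 0) (fun v => ev_proj i v).
Definition p_zero : prog := mkP RZero (fun _ => 0) (fun v => ev_zero v).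
Definition p_S0 : prog := mkP RSucc (fun v => S (hd 0 v)) (fun v => ev_succ v).

Lemma evals_map (Gs : list prog) v : evals (map pc Gs) v (map (fun G => pf G v) Gs).
Proof. induction Gs; simpl; constructor; auto. apply pok. Qed.

Definition p_comp (F : prog) (Gs : list prog) : prog :=
  mkP (RComp (pc F) (map pc Gs)) (fun v => pf F (map (fun G => pf G v) Gs))
      (fun v => ev_comp _ _ _ _ _ (evals_map Gs v) (pok F _)).

Fixpoint precf (F G : list nat -> nat) (n : nat) (w : list nat) : nat :=
  match n with 0 => F w | S n' => G (n' :: precf F G n' w :: w) end.

Lemma eval_prec (F G : prog) n w : eval (RPrec (pc F) (pc G)) (n :: w) (precf (pf F) (pf G) n w).
Proof. induction n; simpl; [apply ev_prec0, pok| eapply ev_precS; [exact IHn| apply pok]]. Qed.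

Lemma p_prec_ok (F G N : prog) (Ws : list prog) v :
  eval (RComp (RPrec (pc F) (pc G)) (pc N :: map pc Ws)) v
       (precf (pf F) (pf G) (pf N v) (map (fun W => pf W v) Ws)).
Proof. eapply ev_comp; [constructor; [apply pok|apply evals_map]|apply eval_prec]. Qed.

Definition p_prec (F G N : prog) (Ws : list prog) : prog :=
  mkP _ _ (p_prec_ok F G N Ws).

Lemma p_call_ok (c : recf) (f : nat -> nat -> nat) (Hc : forall x y, eval c [x; y] (f x y)) (A B : prog) v :
  eval (RComp c [pc A; pc B]) v (f (pf A v) (pf B v)).
Proof. eapply ev_comp; [constructor; [apply pok|constructor; [apply pok|constructor]]|apply Hc]. Qed.

Definition p_call c f Hc A B : prog := mkP _ _ (p_call_ok c f Hc A B).

Definition p1 F A := p_comp F [A].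
Definition p2 F A B := p_comp F [A; B].
Definition p3 F A B C := p_comp F [A; B; C].

Lemma p1_pf F A v : pf (p1 F A) v = pf F [pf A v]. Proof. reflexivity. Qed.
Lemma p2_pf F A B v : pf (p2 F A B) v = pf F [pf A v; pf B v]. Proof. reflexivity. Qed.
Lemma p3_pf F A B C v : pf (p3 F A B C) v = pf F [pf A v; pf B v; pf C v]. Proof. reflexivity. Qed.
Lemma proj_pf i v : pf (p_proj i) v = nth i v 0. Proof. reflexivity. Qed.
Lemma zero_pf v : pf p_zero v = 0. Proof. reflexivity. Qed.
Lemma prec_pf F G N Ws v : pf (p_prec F G N Ws) v = precf (pf F) (pf G) (pf N v) (map (fun W => pf W v) Ws).
Proof. reflexivity. Qed.
Lemma call_pf c f Hc A B v : pf (p_call c f Hc A B) v = f (pf A v) (pf B v). Proof. reflexivity. Qed.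

Definition p_succ (A : prog) : prog := p1 p_S0 A.
Lemma succ_pf A v : pf (p_succ A) v = S (pf A v). Proof. reflexivity. Qed.

Fixpoint p_const (n : nat) : prog := match n with 0 => p_zero | S n => p_succ (p_const n) end.
Lemma const_pf n v : pf (p_const n) v = n.
Proof. induction n; [reflexivity|]. cbn [p_const]. rewrite succ_pf, IHn. reflexivity. Qed.

Global Opaque p1 p2 p3 p_proj p_zero p_prec p_call p_succ.

Hint Rewrite p1_pf p2_pf p3_pf proj_pf zero_pf prec_pf call_pf succ_pf const_pf : pfdb.
Ltac pfs := repeat progress (autorewrite with pfdb; cbn [nth map hd]).

Definition p_add : prog := p_prec (p_proj 0) (p_succ (p_proj 1)) (p_proj 0) [p_proj 1].
Lemma add_pf v : pf p_add v = nth 0 v 0 + nth 1 v 0.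
Proof.
  unfold p_add. pfs. generalize (nth 0 v 0) as n. induction n; simpl; pfs; auto.
Qed.

Definition p_mul : prog := p_prec p_zero (p2 p_add (p_proj 1) (p_proj 2)) (p_proj 0) [p_proj 1].
Lemma mul_pf v : pf p_mul v = nth 0 v 0 * nth 1 v 0.
Proof.
  unfold p_mul. pfs. generalize (nth 0 v 0) as n. induction n; simpl; pfs; rewrite ?add_pf; cbn [nth]; auto.
  rewrite IHn. lia.
Qed.

Definition p_pred : prog := p_prec p_zero (p_proj 0) (p_proj 0) [].
Lemma pred_pf v : pf p_pred v = pred (nth 0 v 0).
Proof. unfold p_pred. pfs. destruct (nth 0 v 0); reflexivity. Qed.

Definition p_sub : prog := p_prec (p_proj 0) (p1 p_pred (p_proj 1)) (p_proj 1) [p_proj 0].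
Lemma sub_pf v : pf p_sub v = nth 0 v 0 - nth 1 v 0.
Proof.
  unfold p_sub. pfs. generalize (nth 1 v 0) as n. induction n; simpl; pfs; rewrite ?pred_pf; cbn [nth]; [lia|].
  rewrite IHn. lia.
Qed.

Definition p_cond : prog := p_prec (p_proj 1) (p_proj 2) (p_proj 0) [p_proj 1; p_proj 2].
Lemma cond_pf v : pf p_cond v = match nth 0 v 0 with 0 => nth 2 v 0 | _ => nth 1 v 0 end.
Proof. unfold p_cond. pfs. destruct (nth 0 v 0); reflexivity. Qed.

Global Opaque p_add p_mul p_pred p_sub p_cond.
Hint Rewrite add_pf mul_pf pred_pf sub_pf cond_pf : pfdb.

Definition eqn (a b : nat) : nat := 1 - ((a - b) + (b - a)).
Definition ltn (a b : nat) : nat := 1 - (1 - (b - a)).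
Definition len (a b : nat) : nat := 1 - (a - b).
Lemma eqn_ne a b : eqn a b <> 0 <-> a = b. Proof. unfold eqn; lia. Qed.
Lemma ltn_ne a b : ltn a b <> 0 <-> a < b. Proof. unfold ltn; lia. Qed.
Lemma len_ne a b : len a b <> 0 <-> a <= b. Proof. unfold len; lia. Qed.

Definition p_eqn : prog := p2 p_sub (p_const 1) (p2 p_add (p2 p_sub (p_proj 0) (p_proj 1)) (p2 p_sub (p_proj 1) (p_proj 0))).
Lemma eqn_pf v : pf p_eqn v = eqn (nth 0 v 0) (nth 1 v 0).
Proof. unfold p_eqn. pfs. reflexivity. Qed.

Definition p_ltn : prog := p2 p_sub (p_const 1) (p2 p_sub (p_const 1) (p2 p_sub (p_proj 1) (p_proj 0))).
Lemma ltn_pf v : pf p_ltn v = ltn (nth 0 v 0) (nth 1 v 0).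
Proof. unfold p_ltn. pfs. reflexivity. Qed.

Definition p_len : prog := p2 p_sub (p_const 1) (p2 p_sub (p_proj 0) (p_proj 1)).
Lemma len_pf v : pf p_len v = len (nth 0 v 0) (nth 1 v 0).
Proof. unfold p_len. pfs. reflexivity. Qed.

Definition p_tri : prog := p_prec p_zero (p2 p_add (p_proj 1) (p_succ (p_proj 0))) (p_proj 0) [].
Lemma tri_pf v : pf p_tri v = tri (nth 0 v 0).
Proof.
  unfold p_tri. pfs. generalize (nth 0 v 0) as n. induction n; simpl; pfs; try rewrite IHn; try lia; auto.
Qed.

Definition p_cpair : prog := p2 p_add (p1 p_tri (p2 p_add (p_proj 0) (p_proj 1))) (p_proj 1).
Lemma cpair_pf v : pf p_cpair v = cpair (nth 0 v 0) (nth 1 v 0).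
Proof. unfold p_cpair. pfs. rewrite tri_pf. pfs. rewrite cpair_tri. reflexivity. Qed.

Global Opaque p_eqn p_ltn p_len p_tri p_cpair.
Hint Rewrite eqn_pf ltn_pf len_pf tri_pf cpair_pf : pfdb.

Definition p_dg : prog := p_prec p_zero
  (p3 p_cond (p2 p_len (p1 p_tri (p_succ (p_proj 1))) (p_succ (p_proj 0))) (p_succ (p_proj 1)) (p_proj 1))
  (p_proj 0) [].
Lemma dg_pf v : pf p_dg v = dg (nth 0 v 0).
Proof.
  unfold p_dg. pfs. generalize (nth 0 v 0) as n. induction n; simpl; pfs; auto.
  rewrite IHn. unfold len. simpl tri.
  destruct (Nat.leb_spec (tri (dg n) + S (dg n)) (S n)) as [h|h].
  - replace (tri (dg n) + S (dg n) - S n) with 0 by lia. reflexivity.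
  - replace (1 - (tri (dg n) + S (dg n) - S n)) with 0 by lia. reflexivity.
Qed.
Global Opaque p_dg. Hint Rewrite dg_pf : pfdb.

Definition p_py : prog := p2 p_sub (p_proj 0) (p1 p_tri (p1 p_dg (p_proj 0))).
Lemma py_pf v : pf p_py v = py (nth 0 v 0).
Proof. unfold p_py. pfs. reflexivity. Qed.
Global Opaque p_py. Hint Rewrite py_pf : pfdb.
Definition p_px : prog := p2 p_sub (p1 p_dg (p_proj 0)) (p1 p_py (p_proj 0)).
Lemma px_pf v : pf p_px v = px (nth 0 v 0).
Proof. unfold p_px. pfs. reflexivity. Qed.
Global Opaque p_px. Hint Rewrite px_pf : pfdb.
Definition p_par : prog := p1 p_py (p1 p_pred (p_proj 0)).
Lemma par_pf v : pf p_par v = par (nth 0 v 0).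
Proof. unfold p_par. pfs. reflexivity. Qed.
Definition p_lastx : prog := p1 p_px (p1 p_pred (p_proj 0)).
Lemma lastx_pf v : pf p_lastx v = lastx (nth 0 v 0).
Proof. unfold p_lastx. pfs. reflexivity. Qed.
Global Opaque p_par p_lastx. Hint Rewrite par_pf lastx_pf : pfdb.

Definition p_parn : prog := p_prec (p_proj 0) (p1 p_par (p_proj 1)) (p_proj 0) [p_proj 1].
Lemma parn_pf v : pf p_parn v = parn (nth 0 v 0) (nth 1 v 0).
Proof.
  unfold p_parn, parn. pfs. generalize (nth 0 v 0) as n. induction n; simpl; pfs; auto.
  all: try (rewrite IHn; reflexivity).
Qed.
Global Opaque p_parn. Hint Rewrite parn_pf : pfdb.

Definition p_rstep : prog := p3 p_cond (p2 p_eqn (p1 p_px (p_proj 0)) (p_const 0)) (p_proj 0)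
  (p2 p_cpair (p1 p_par (p1 p_px (p_proj 0))) (p_succ (p2 p_cpair (p1 p_lastx (p1 p_px (p_proj 0))) (p1 p_py (p_proj 0))))).
Lemma rstep_pf v : pf p_rstep v = rstep (nth 0 v 0).
Proof.
  unfold p_rstep, rstep. pfs. unfold eqn. destruct (px (nth 0 v 0)); reflexivity.
Qed.
Global Opaque p_rstep. Hint Rewrite rstep_pf : pfdb.

Definition p_revc : prog := p1 p_py (p_prec (p_proj 0) (p1 p_rstep (p_proj 1)) (p_proj 0) [p2 p_cpair (p_proj 0) p_zero]).
Lemma revc_pf v : pf p_revc v = revc (nth 0 v 0).
Proof.
  unfold p_revc, revc. pfs. f_equal. generalize (cpair (nth 0 v 0) 0) as z. generalize (nth 0 v 0) as n.
  induction n; intro z; simpl; pfs; auto; try (rewrite IHn; reflexivity).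
Qed.
Global Opaque p_revc. Hint Rewrite revc_pf : pfdb.

Fixpoint prodk (n : nat) (f : nat -> nat) : nat := match n with 0 => 1 | S n => prodk n f * f n end.

Definition aliveN (a : nat -> nat) (N : nat) : nat := prodk (S N) (fun k => 1 - (1 - a (revc (parn k N)))).
Definition preqN (s t : nat) : nat := 1 - prodk (S t) (fun k => 1 - eqn (parn k t) s).
Definition preN (s t : nat) : nat := (1 - (1 - t)) * preqN s (par t).

Definition p_sg (A : prog) : prog := p2 p_sub (p_const 1) (p2 p_sub (p_const 1) A).
Lemma sg_pf A v : pf (p_sg A) v = 1 - (1 - pf A v).
Proof. unfold p_sg. pfs. reflexivity. Qed.
Global Opaque p_sg. Hint Rewrite sg_pf : pfdb.

Definition p_alive (c : recf) (f : nat -> nat -> nat) (Hc : forall x y, eval c [x; y] (f x y)) : prog :=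
  p_prec (p_const 1) (p2 p_mul (p_proj 1) (p_sg (p_call c f Hc (p_proj 3) (p1 p_revc (p2 p_parn (p_proj 0) (p_proj 2))))))
    (p_succ (p_proj 0)) [p_proj 0; p_proj 1].
Lemma alive_pf c f Hc v : pf (p_alive c f Hc) v = aliveN (f (nth 1 v 0)) (nth 0 v 0).
Proof.
  unfold p_alive, aliveN. pfs. generalize (S (nth 0 v 0)) as n. induction n; simpl; pfs; auto.
  all: try (rewrite IHn; reflexivity).
Qed.

Definition p_preq : prog := p2 p_sub (p_const 1)
  (p_prec (p_const 1) (p2 p_mul (p_proj 1) (p2 p_sub (p_const 1) (p2 p_eqn (p2 p_parn (p_proj 0) (p_proj 3)) (p_proj 2))))
     (p_succ (p_proj 1)) [p_proj 0; p_proj 1]).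
Lemma preq_pf v : pf p_preq v = preqN (nth 0 v 0) (nth 1 v 0).
Proof.
  unfold p_preq, preqN. pfs. f_equal. generalize (S (nth 1 v 0)) as n. induction n; simpl; pfs; auto.
  all: try (rewrite IHn; reflexivity).
Qed.
Global Opaque p_preq. Hint Rewrite preq_pf : pfdb.

Definition p_pre : prog := p2 p_mul (p_sg (p_proj 1)) (p2 p_preq (p_proj 0) (p1 p_par (p_proj 1))).
Lemma pre_pf v : pf p_pre v = preN (nth 0 v 0) (nth 1 v 0).
Proof. unfold p_pre, preN. pfs. reflexivity. Qed.
Global Opaque p_pre p_alive. Hint Rewrite pre_pf alive_pf : pfdb.

Lemma add_ne a b : a + b <> 0 <-> a <> 0 \/ b <> 0. Proof. lia. Qed.
Lemma mul_ne a b : a * b <> 0 <-> a <> 0 /\ b <> 0. Proof. split; [intro H; split; intro; subst; lia| intros [H1 H2]; apply Nat.neq_mul_0; auto]. Qed.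
Lemma sg_ne a : 1 - (1 - a) <> 0 <-> a <> 0. Proof. lia. Qed.

Lemma prodk_ne n f : prodk n f <> 0 <-> forall k, k < n -> f k <> 0.
Proof.
  induction n; simpl.
  - split; [intros; lia|lia].
  - rewrite mul_ne, IHn. split.
    + intros [H1 H2] k Hk. destruct (Nat.eq_dec k n); [subst; auto|apply H1; lia].
    + intros H; split; [intros; apply H; lia|apply H; lia].
Qed.

Lemma aliveN_ne a N : aliveN a N <> 0 <-> alive a N.
Proof.
  unfold aliveN, alive. rewrite prodk_ne. split.
  - intros H M HM. apply preq_parn in HM as [k [Hk <-]]. specialize (H k ltac:(lia)). lia.
  - intros H k Hk. apply sg_ne. apply H. apply preq_parn. exists k; split; auto; lia.
Qed.

Lemma preqN_ne s t : preqN s t <> 0 <-> preq s t.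
Proof.
  unfold preqN. rewrite preq_parn.
  assert (prodk (S t) (fun k => 1 - eqn (parn k t) s) = 0 <-> exists k, k <= t /\ parn k t = s).
  { split.
    - intro H. apply NNPP. intro Hn. apply (proj2 (prodk_ne _ _) ) in H; auto.
      intros k Hk. intro E. apply Hn. exists k. split; [lia|]. apply eqn_ne. lia.
    - intros [k [Hk E]]. apply NNPP. intro Hn. apply (proj1 (prodk_ne _ _)) with (k := k) in Hn; [|lia].
      apply Hn. apply eqn_ne in E. unfold eqn in *. lia. }
  assert (prodk (S t) (fun k => 1 - eqn (parn k t) s) <= 1).
  { clear. induction (S t); cbn [prodk]; [lia|].
    assert (1 - eqn (parn n t) s <= 1) by lia. pose proof (Nat.mul_le_mono _ _ _ _ IHn H). lia. }
  split; intro Hx; [apply (proj1 H); lia|apply (proj2 H) in Hx; lia].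
Qed.

Lemma preN_ne s t : preN s t <> 0 <-> pre s t.
Proof. unfold preN. rewrite mul_ne, sg_ne, preqN_ne, pre_preq_par. tauto. Qed.

Definition relN6 (a1 a2 a3 : nat -> nat) (t s m t' s' m' : nat) : nat :=
  eqn t 0 * eqn t' 0 * eqn s s' * eqn m m' * aliveN a1 s +
  eqn t 1 * eqn t' 1 * eqn s s' * ltn m m' * aliveN a1 s +
  eqn t 1 * eqn t' 0 * eqn s s' * len m m' * aliveN a1 s +
  eqn t 2 * eqn t' 2 * eqn m 0 * eqn m' 0 * aliveN a1 s' * preN s s' +
  eqn t 2 * eqn t' 0 * eqn m 0 * aliveN a1 s' * preqN s s' +
  eqn t 3 * eqn t' 3 * eqn s s' * eqn m 0 * eqn m' 0 * aliveN a2 s +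
  (eqn t 4 + eqn t 5) * eqn t' t * eqn m 0 * eqn m' 0 * aliveN a2 s' * preN s s' +
  (eqn t 4 + eqn t 5) * eqn t' 3 * eqn m 0 * eqn m' 0 * aliveN a2 s' * preqN s s' +
  eqn t 6 * eqn t' 6 * eqn s s' * eqn m 0 * eqn m' 0 * aliveN a3 s +
  eqn t 7 * eqn t' 7 * eqn m 0 * eqn m' 0 * aliveN a3 s' * preN s s' +
  eqn t 7 * eqn t' 6 * eqn m 0 * eqn m' 0 * aliveN a3 s' * preqN s s' +
  eqn t 7 * eqn t' 8 * eqn m 0 * eqn s' 0 * eqn m' 0 * aliveN a3 s +
  eqn t 8 * eqn s 0 * eqn m 0 * eqn t' 8 * eqn s' 0 * eqn m' 0.

Definition RelP6 (a1 a2 a3 : nat -> nat) (t s m t' s' m' : nat) : Prop :=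
  (t = 0 /\ t' = 0 /\ s = s' /\ m = m' /\ alive a1 s) \/
  (t = 1 /\ t' = 1 /\ s = s' /\ m < m' /\ alive a1 s) \/
  (t = 1 /\ t' = 0 /\ s = s' /\ m <= m' /\ alive a1 s) \/
  (t = 2 /\ t' = 2 /\ m = 0 /\ m' = 0 /\ alive a1 s' /\ pre s s') \/
  (t = 2 /\ t' = 0 /\ m = 0 /\ alive a1 s' /\ preq s s') \/
  (t = 3 /\ t' = 3 /\ s = s' /\ m = 0 /\ m' = 0 /\ alive a2 s) \/
  ((t = 4 \/ t = 5) /\ t' = t /\ m = 0 /\ m' = 0 /\ alive a2 s' /\ pre s s') \/
  ((t = 4 \/ t = 5) /\ t' = 3 /\ m = 0 /\ m' = 0 /\ alive a2 s' /\ preq s s') \/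
  (t = 6 /\ t' = 6 /\ s = s' /\ m = 0 /\ m' = 0 /\ alive a3 s) \/
  (t = 7 /\ t' = 7 /\ m = 0 /\ m' = 0 /\ alive a3 s' /\ pre s s') \/
  (t = 7 /\ t' = 6 /\ m = 0 /\ m' = 0 /\ alive a3 s' /\ preq s s') \/
  (t = 7 /\ t' = 8 /\ m = 0 /\ s' = 0 /\ m' = 0 /\ alive a3 s) \/
  (t = 8 /\ s = 0 /\ m = 0 /\ t' = 8 /\ s' = 0 /\ m' = 0).

Lemma relN6_ne a1 a2 a3 t s m t' s' m' : relN6 a1 a2 a3 t s m t' s' m' <> 0 <-> RelP6 a1 a2 a3 t s m t' s' m'.
Proof.
  unfold relN6, RelP6. rewrite !add_ne, !mul_ne, !add_ne, !eqn_ne, !ltn_ne, !len_ne, !aliveN_ne, !preN_ne, !preqN_ne.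
  tauto.
Qed.

Lemma RelP_Rl a1 a2 a3 t s m t' s' m' : RelP6 a1 a2 a3 t s m t' s' m' -> Rl a1 a2 a3 (el t s m) (el t' s' m').
Proof.
  unfold RelP6. intro H.
  repeat match goal with H : _ \/ _ |- _ => destruct H as [H|H] end;
  repeat match goal with H : _ /\ _ |- _ => destruct H as [? H] end; subst.
  all: first [solve [apply r_e1; auto] | solve [apply r_ff; auto] | solve [apply r_fe; auto] | solve [apply r_uu1; auto] | solve [apply r_ue1; auto]
             | solve [apply r_e2; auto] | solve [apply r_uu2; auto] | solve [apply r_ue2; auto] | solve [apply r_e3; auto] | solve [apply r_uu3; auto]
             | solve [apply r_ue3; auto] | solve [apply r_uw; auto] | solve [apply r_w] | idtac].
Qed.

Lemma Rl_RelP a1 a2 a3 x y : Rl a1 a2 a3 x y <->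
  RelP6 a1 a2 a3 (px x) (px (py x)) (py (py x)) (px y) (px (py y)) (py (py y)).
Proof.
  split.
  - intro H. unfold RelP6. inversion H; subst; unfold w8; rewrite ?px_el, ?pxpy_el, ?pypy_el.
    all: try (left; repeat split; auto; fail).
    all: do 12 try (try (left; repeat split; auto; lia); right).
    all: repeat split.
  - intro H. rewrite (el_surj x), (el_surj y). apply RelP_Rl. exact H.
Qed.

Definition relN (a1 a2 a3 : nat -> nat) (x y : nat) : nat :=
  relN6 a1 a2 a3 (px x) (px (py x)) (py (py x)) (px y) (px (py y)) (py (py y)).

Lemma relN_ne a1 a2 a3 x y : relN a1 a2 a3 x y <> 0 <-> Rl a1 a2 a3 x y.
Proof. unfold relN. rewrite relN6_ne, Rl_RelP. reflexivity. Qed.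

Fixpoint eval_det c v y (H : eval c v y) {struct H} : forall y', eval c v y' -> y = y'
with evals_det gs v ys (H : evals gs v ys) {struct H} : forall ys', evals gs v ys' -> ys = ys'.
Proof.
  - destruct H; intros y' H'.
    + inversion H'; auto.
    + inversion H'; auto.
    + inversion H'; auto.
    + inversion H'; subst.
      assert (ys = ys0) by (eapply evals_det; eauto). subst.
      eapply eval_det; eauto.
    + inversion H'; subst. eapply eval_det; eauto.
    + inversion H'; subst.
      assert (z = z0) by (eapply eval_det; eauto). subst.
      eapply eval_det; eauto.
    + inversion H'; subst.
      destruct (Nat.lt_trichotomy n y') as [Hlt|[Heq|Hgt]]; auto.
      * exfalso. match goal with Hf : forall m, m < y' -> exists k, eval _ (m :: _) (S k) |- _ =>
          destruct (Hf n Hlt) as [k Hk] end. pose proof (eval_det _ _ _ H _ Hk). discriminate.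
      * exfalso. match goal with Hf : forall m, m < n -> exists k, eval _ (m :: _) (S k) |- _ =>
          destruct (Hf y' Hgt) as [k Hk] end.
        match goal with H0 : eval _ (y' :: _) 0 |- _ => pose proof (eval_det _ _ _ Hk _ H0) end. discriminate.
  - destruct H; intros ys' H'.
    + inversion H'; auto.
    + inversion H'; subst. f_equal; [eapply eval_det; eauto| eapply evals_det; eauto].
Qed.


Definition recf_ind' (P : recf -> Prop) (H0 : P RZero) (H1 : P RSucc) (H2 : forall i, P (RProj i))
  (H3 : forall f gs, P f -> Forall P gs -> P (RComp f gs)) (H4 : forall f g, P f -> P g -> P (RPrec f g))
  (H5 : forall f, P f -> P (RMin f)) : forall c, P c :=
  fix F c := match c with
  | RZero => H0 | RSucc => H1 | RProj i => H2 i
  | RComp f gs => H3 f gs (F f) ((fix G l : Forall P l := match l with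
                                  | [] => Forall_nil P
                                  | g :: l' => Forall_cons g (F g) (G l') end) gs)
  | RPrec f g => H4 f g (F f) (F g)
  | RMin f => H5 f (F f) end.

Fixpoint encl (l : list recf) : nat := match l with [] => 0 | g :: l' => S (cpair (enc g) (encl l')) end.

Lemma enc_comp f gs : enc (RComp f gs) = cpair 3 (cpair (enc f) (encl gs)).
Proof. reflexivity. Qed.

Lemma enc_inj c1 c2 : enc c1 = enc c2 -> c1 = c2.
Proof.
  revert c2. induction c1 as [| |i|f gs IHf IHgs|f g IHf IHg|f IHf] using recf_ind'; intros c2 H;
  destruct c2 as [| |i'|f' gs'|f' g'|f']; try rewrite !enc_comp in H; cbn [enc] in H;
  try (apply cpair_inj in H as [H _]; discriminate H);
  apply cpair_inj in H as [_ H]; try (apply cpair_inj in H as [H1 H2]).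
  - reflexivity.
  - reflexivity.
  - subst; reflexivity.
  - rewrite (IHf _ H1). f_equal. clear IHf H1. revert gs' H2. induction IHgs; intros gs' H2; destruct gs'; cbn [encl] in H2; try discriminate.
    + reflexivity.
    + injection H2 as H2. apply cpair_inj in H2 as [E1 E2]. f_equal; auto.
  - rewrite (IHf _ H1), (IHg _ H2). reflexivity.
  - rewrite (IHf _ H). reflexivity.
Qed.

Inductive ex : Type :=
| EV (i : nat) | EC (n : nat) | EAdd (a b : ex) | EMul (a b : ex) | EEq (a b : ex)
| ELt (a b : ex) | ELe (a b : ex) | EPre (a b : ex) | EPreq (a b : ex) | EAl (g : nat) (N P : ex).

Fixpoint exsem (Fs : nat -> nat -> nat -> nat) (v : list nat) (e : ex) : nat :=
  match e with
  | EV i => nth i v 0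
  | EC n => n
  | EAdd a b => exsem Fs v a + exsem Fs v b
  | EMul a b => exsem Fs v a * exsem Fs v b
  | EEq a b => eqn (exsem Fs v a) (exsem Fs v b)
  | ELt a b => ltn (exsem Fs v a) (exsem Fs v b)
  | ELe a b => len (exsem Fs v a) (exsem Fs v b)
  | EPre a b => preN (exsem Fs v a) (exsem Fs v b)
  | EPreq a b => preqN (exsem Fs v a) (exsem Fs v b)
  | EAl g N P => aliveN (Fs g (exsem Fs v P)) (exsem Fs v N)
  end.

Fixpoint compile (Cs : nat -> recf) (Fs : nat -> nat -> nat -> nat)
  (HC : forall g x y, eval (Cs g) [x; y] (Fs g x y)) (e : ex) : prog :=
  match e with
  | EV i => p_proj i
  | EC n => p_const n
  | EAdd a b => p2 p_add (compile Cs Fs HC a) (compile Cs Fs HC b)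
  | EMul a b => p2 p_mul (compile Cs Fs HC a) (compile Cs Fs HC b)
  | EEq a b => p2 p_eqn (compile Cs Fs HC a) (compile Cs Fs HC b)
  | ELt a b => p2 p_ltn (compile Cs Fs HC a) (compile Cs Fs HC b)
  | ELe a b => p2 p_len (compile Cs Fs HC a) (compile Cs Fs HC b)
  | EPre a b => p2 p_pre (compile Cs Fs HC a) (compile Cs Fs HC b)
  | EPreq a b => p2 p_preq (compile Cs Fs HC a) (compile Cs Fs HC b)
  | EAl g N P => p2 (p_alive (Cs g) (Fs g) (HC g)) (compile Cs Fs HC N) (compile Cs Fs HC P)
  end.

Lemma compile_pf Cs Fs HC e v : pf (compile Cs Fs HC e) v = exsem Fs v e.
Proof. induction e; cbn [compile exsem]; pfs; rewrite ?IHe1, ?IHe2; auto. Qed.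

Definition muls (a : ex) (l : list ex) : ex := fold_left EMul l a.
Definition adds (a : ex) (l : list ex) : ex := fold_left EAdd l a.

Definition relex : ex :=
  let t := EV 0 in let s := EV 1 in let m := EV 2 in let t' := EV 3 in let s' := EV 4 in let m' := EV 5 in
  let p := EV 6 in
  adds (muls (EEq t (EC 0)) [EEq t' (EC 0); EEq s s'; EEq m m'; EAl 1 s p])
  [ muls (EEq t (EC 1)) [EEq t' (EC 1); EEq s s'; ELt m m'; EAl 1 s p];
    muls (EEq t (EC 1)) [EEq t' (EC 0); EEq s s'; ELe m m'; EAl 1 s p];
    muls (EEq t (EC 2)) [EEq t' (EC 2); EEq m (EC 0); EEq m' (EC 0); EAl 1 s' p; EPre s s'];
    muls (EEq t (EC 2)) [EEq t' (EC 0); EEq m (EC 0); EAl 1 s' p; EPreq s s'];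
    muls (EEq t (EC 3)) [EEq t' (EC 3); EEq s s'; EEq m (EC 0); EEq m' (EC 0); EAl 2 s p];
    muls (EAdd (EEq t (EC 4)) (EEq t (EC 5))) [EEq t' t; EEq m (EC 0); EEq m' (EC 0); EAl 2 s' p; EPre s s'];
    muls (EAdd (EEq t (EC 4)) (EEq t (EC 5))) [EEq t' (EC 3); EEq m (EC 0); EEq m' (EC 0); EAl 2 s' p; EPreq s s'];
    muls (EEq t (EC 6)) [EEq t' (EC 6); EEq s s'; EEq m (EC 0); EEq m' (EC 0); EAl 3 s p];
    muls (EEq t (EC 7)) [EEq t' (EC 7); EEq m (EC 0); EEq m' (EC 0); EAl 3 s' p; EPre s s'];
    muls (EEq t (EC 7)) [EEq t' (EC 6); EEq m (EC 0); EEq m' (EC 0); EAl 3 s' p; EPreq s s'];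
    muls (EEq t (EC 7)) [EEq t' (EC 8); EEq m (EC 0); EEq s' (EC 0); EEq m' (EC 0); EAl 3 s p];
    muls (EEq t (EC 8)) [EEq s (EC 0); EEq m (EC 0); EEq t' (EC 8); EEq s' (EC 0); EEq m' (EC 0)] ].

Lemma relex_sem Fs t s m t' s' m' p :
  exsem Fs [t; s; m; t'; s'; m'; p] relex = relN6 (Fs 1 p) (Fs 2 p) (Fs 3 p) t s m t' s' m'.
Proof. reflexivity. Qed.

Lemma comp_pf F Gs v : pf (p_comp F Gs) v = pf F (map (fun G => pf G v) Gs).
Proof. reflexivity. Qed.

Definition p_rel Cs Fs HC : prog :=
  p_comp (compile Cs Fs HC relex)
    [p1 p_px (p1 p_px (p_proj 0)); p1 p_px (p1 p_py (p1 p_px (p_proj 0))); p1 p_py (p1 p_py (p1 p_px (p_proj 0)));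
     p1 p_px (p1 p_py (p_proj 0)); p1 p_px (p1 p_py (p1 p_py (p_proj 0))); p1 p_py (p1 p_py (p1 p_py (p_proj 0)));
     p_proj 1].

Lemma rel_pf Cs Fs HC v : pf (p_rel Cs Fs HC) v =
  relN (Fs 1 (nth 1 v 0)) (Fs 2 (nth 1 v 0)) (Fs 3 (nth 1 v 0)) (px (nth 0 v 0)) (py (nth 0 v 0)).
Proof. unfold p_rel. rewrite comp_pf. cbn [map]. rewrite compile_pf. pfs. rewrite relex_sem. reflexivity. Qed.

Definition p_not (A : prog) : prog := p2 p_sub (p_const 1) A.
Lemma not_pf A v : pf (p_not A) v = 1 - pf A v.
Proof. unfold p_not. pfs. reflexivity. Qed.

Lemma min_halts (P : prog) v : (exists y, eval (RMin (pc P)) v y) <-> exists n, pf P (n :: v) = 0.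
Proof.
  split.
  - intros [y Hy]. inversion Hy; subst. exists y. eapply eval_det; [apply pok|eauto].
  - intro Hn. destruct (least_ex _ Hn) as [n [H0 Hmin]]. exists n. apply ev_min.
    + rewrite <- H0. apply pok.
    + intros m Hm. specialize (Hmin m Hm). exists (pred (pf P (m :: v))).
      replace (S (pred (pf P (m :: v)))) with (pf P (m :: v)) by lia. apply pok.
Qed.

Definition Cv Cs Fs HC : recf := RMin (pc (p_not (p_comp (p_rel Cs Fs HC) [p_proj 1; p_proj 2]))).
Definition Cce Cs Fs HC : recf := RMin (pc (p_not (p_comp (p_rel Cs Fs HC) [p2 p_cpair (p_proj 1) (p_proj 0); p_proj 2]))).

Fixpoint Kc (p : nat) : recf := match p with 0 => RZero | S p => RComp RSucc [Kc p] end.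
Lemma Kc_ok p v : eval (Kc p) v p.
Proof.
  induction p as [|p IH] in v |- *; [apply ev_zero|].
  eapply ev_comp; [constructor; [apply IH|constructor]|]. apply (ev_succ [p]).
Qed.

Lemma wrap_eval c p x y : eval (RComp c [RProj 0; Kc p]) [x] y <-> eval c [x; p] y.
Proof.
  split.
  - intro H. inversion H; subst.
    assert (E : evals [RProj 0; Kc p] [x] [x; p]) by (constructor; [apply (ev_proj 0 [x])|constructor; [apply Kc_ok|constructor]]).
    match goal with H1 : evals _ _ ?ys, H2 : eval c ?ys y |- _ => pose proof (evals_det _ _ _ H1 _ E) as E'; rewrite E' in H2; exact H2 end.
  - intro H. eapply ev_comp; [|exact H]. constructor; [apply (ev_proj 0 [x])|constructor; [apply Kc_ok|constructor]].
Qed.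

Lemma W_enc c x : W (enc c) x <-> exists y, eval c [x] y.
Proof.
  unfold W, phi. split.
  - intros [y [c' [E H]]]. apply enc_inj in E. subst. eauto.
  - intros [y H]. exists y, c. auto.
Qed.

Lemma W_Cv Cs Fs HC p x : W (enc (RComp (Cv Cs Fs HC) [RProj 0; Kc p])) x <->
  Rl (Fs 1 p) (Fs 2 p) (Fs 3 p) (px x) (py x).
Proof.
  rewrite W_enc. setoid_rewrite wrap_eval. unfold Cv. rewrite min_halts.
  rewrite <- relN_ne. split.
  - intros [n Hn]. rewrite not_pf, comp_pf in Hn. cbn [map] in Hn. rewrite rel_pf in Hn. rewrite !proj_pf in Hn. cbn [nth] in Hn. lia.
  - intro H. exists 0. rewrite not_pf, comp_pf. cbn [map]. rewrite rel_pf, !proj_pf. cbn [nth]. lia.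
Qed.

Lemma W_Cce Cs Fs HC p k : W (enc (RComp (Cce Cs Fs HC) [RProj 0; Kc p])) k <->
  exists n, Rl (Fs 1 p) (Fs 2 p) (Fs 3 p) k n.
Proof.
  rewrite W_enc. setoid_rewrite wrap_eval. unfold Cce. rewrite min_halts.
  split.
  - intros [n Hn]. exists n. apply relN_ne. rewrite not_pf, comp_pf in Hn. cbn [map] in Hn.
    rewrite rel_pf in Hn. rewrite !proj_pf, p2_pf, cpair_pf, !proj_pf in Hn. cbn [nth] in Hn.
    rewrite px_cpair, py_cpair in Hn. lia.
  - intros [n H]. exists n. apply relN_ne in H. rewrite not_pf, comp_pf. cbn [map].
    rewrite rel_pf, !proj_pf, p2_pf, cpair_pf, !proj_pf. cbn [nth]. rewrite px_cpair, py_cpair. lia.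
Qed.

Fixpoint quoteP (c : recf) : prog :=
  match c with
  | RZero => p2 p_cpair (p_const 0) (p_const 0)
  | RSucc => p2 p_cpair (p_const 1) (p_const 0)
  | RProj i => p2 p_cpair (p_const 2) (p_const i)
  | RComp f gs => p2 p_cpair (p_const 3) (p2 p_cpair (quoteP f)
      ((fix ql (l : list recf) : prog := match l with
         | [] => p_zero
         | g :: l' => p_succ (p2 p_cpair (quoteP g) (ql l')) end) gs))
  | RPrec f g => p2 p_cpair (p_const 4) (p2 p_cpair (quoteP f) (quoteP g))
  | RMin f => p2 p_cpair (p_const 5) (quoteP f)
  end.

Lemma quote_pf c v : pf (quoteP c) v = enc c.
Proof.
  induction c as [| |i|f gs IHf IHgs|f g IHf IHg|f IHf] using recf_ind'; cbn [quoteP]; pfs; auto.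
  - rewrite enc_comp. rewrite IHf. f_equal. f_equal.
    induction IHgs; cbn [encl]; pfs; auto. all: try (rewrite H0; f_equal; rewrite IHIHgs; reflexivity).
  - cbn [enc]. rewrite IHf, IHg. reflexivity.
  - cbn [enc]. rewrite IHf. reflexivity.
Qed.

Global Opaque Cv Cce.

Opaque cpair.

Definition p_kenc : prog :=
  p_prec (quoteP RZero) (p2 p_cpair (p_const 3) (p2 p_cpair (quoteP RSucc) (p_succ (p2 p_cpair (p_proj 1) p_zero))))
    (p_proj 0) [].
Lemma kenc_pf v : pf p_kenc v = enc (Kc (nth 0 v 0)).
Proof.
  unfold p_kenc. pfs. generalize (nth 0 v 0) as n. induction n; cbn [precf]; rewrite ?quote_pf; auto.
  pfs. rewrite IHn, quote_pf. cbn [Kc]. rewrite enc_comp. cbn [encl]. reflexivity.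
Qed.
Global Opaque p_kenc.

Definition gfun Cs Fs HC (p : nat) : nat := enc (RComp (Cv Cs Fs HC) [RProj 0; Kc p]).
Lemma gfun_eq Cs Fs HC p : gfun Cs Fs HC p =
  cpair 3 (cpair (enc (Cv Cs Fs HC)) (S (cpair (enc (RProj 0)) (S (cpair (enc (Kc p)) 0))))).
Proof. unfold gfun. rewrite enc_comp. do 2 f_equal. Qed.
Global Opaque gfun.

Global Opaque gfun.

Definition p_g Cs Fs HC : prog :=
  p2 p_cpair (p_const 3) (p2 p_cpair (quoteP (Cv Cs Fs HC))
     (p_succ (p2 p_cpair (quoteP (RProj 0)) (p_succ (p2 p_cpair p_kenc p_zero))))).

Lemma g_pf Cs Fs HC v : pf (p_g Cs Fs HC) v = gfun Cs Fs HC (nth 0 v 0).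
Proof.
  rewrite gfun_eq. unfold p_g.
  rewrite p2_pf. rewrite cpair_pf. cbn [nth map hd]. rewrite const_pf. rewrite p2_pf. rewrite cpair_pf.
  cbn [nth map hd]. rewrite quote_pf. rewrite succ_pf, p2_pf, cpair_pf. cbn [nth map hd].
  rewrite quote_pf, succ_pf, p2_pf, cpair_pf. cbn [nth map hd]. rewrite kenc_pf, zero_pf. reflexivity.
Qed.


Lemma gfun_computable Cs Fs HC : computable (gfun Cs Fs HC).
Proof.
  exists (enc (pc (p_g Cs Fs HC))). intro p. exists (pc (p_g Cs Fs HC)). split; [reflexivity|].
  pose proof (pok (p_g Cs Fs HC) [p]) as Hp. rewrite g_pf in Hp. exact Hp.
Qed.

Lemma Pi11_code A : Pi11 A -> exists c (f : nat -> nat -> nat),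
  (forall x y, eval c [x; y] (f x y)) /\ forall p, A p <-> NoP (f p).
Proof.
  intros [e [Htot Hchar]].
  destruct (Htot 0 0) as [b [c [Ec _]]].
  assert (Hphi : forall args y, phi e args y <-> eval c args y).
  { intros args y. unfold phi. split.
    - intros [c' [E H]]. rewrite <- Ec in E. apply enc_inj in E. subst. auto.
    - intro H. exists c. auto. }
  assert (Ht : forall x y, exists b, eval c [x; y] b).
  { intros x y. destruct (Htot x y) as [b' Hb']. exists b'. apply Hphi. auto. }
  exists c, (fun x y => proj1_sig (constructive_indefinite_description _ (Ht x y))).
  assert (Hf : forall x y, eval c [x; y] (proj1_sig (constructive_indefinite_description _ (Ht x y)))).
  { intros x y. destruct (constructive_indefinite_description _ (Ht x y)); simpl; auto. }
  split; auto.
  intro p. unfold NoP. rewrite <- tree_link. unfold Pi11form. rewrite Hchar.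
  split; intros H g; destruct (H g) as [n Hn]; exists n.
  - apply Hphi in Hn. eapply eval_det; [apply Hf|exact Hn].
  - apply Hphi. rewrite <- Hn. apply Hf.
Qed.

Lemma clos_trans_id (R : nat -> nat -> Prop) : transR R -> forall x y, clos_trans nat R x y <-> R x y.
Proof.
  intros Ht x y. split.
  - induction 1; auto. eapply Ht; eauto.
  - intro; apply t_step; auto.
Qed.

Theorem theorem26 (M H F : nat -> Prop) :
  Pi11 M -> Pi11 H -> Pi11 F ->
  (forall p, M p -> H p) -> (forall p, H p -> F p) ->
  exists g : nat -> nat, computable g /\
    forall p,
      ce_space (iota (g p)) /\
      (M p -> metrizable (iota (g p))) /\
      (H p /\ ~ M p -> Hausdorff (iota (g p)) /\ ~ metrizable (iota (g p))) /\
      (F p /\ ~ H p -> T1 (iota (g p)) /\ ~ Hausdorff (iota (g p))) /\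
      (~ F p -> ~ T1 (iota (g p))).
Proof.
  intros HM HH HF HMH HHF.
  destruct (Pi11_code M HM) as [cM [fM [HcM EM]]].
  destruct (Pi11_code H HH) as [cH [fH [HcH EH]]].
  destruct (Pi11_code F HF) as [cF [fF [HcF EF]]].
  set (Cs := fun g => match g with 1 => cM | 2 => cH | _ => cF end).
  set (Fs := fun g => match g with 1 => fM | 2 => fH | _ => fF end).
  assert (HC : forall g x y, eval (Cs g) [x; y] (Fs g x y)).
  { intros g x y. destruct g as [|[|[|g]]]; simpl; auto. }
  exists (gfun Cs Fs HC). split; [apply gfun_computable|]. intro p.
  assert (Hio : iota (gfun Cs Fs HC p) = Rl (fM p) (fH p) (fF p)).
  { apply functional_extensionality; intro i. apply functional_extensionality; intro j.
    apply propositional_extensionality. unfold iota, Vt.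
    rewrite <- (clos_trans_id (Rl (fM p) (fH p) (fF p)) (Rl_trans _ _ _)).
    assert (HV : forall a b, V (gfun Cs Fs HC p) a b <-> Rl (fM p) (fH p) (fF p) a b).
    { intros a b. unfold V. Transparent gfun. unfold gfun. Opaque gfun. rewrite W_Cv.
      rewrite px_cpair, py_cpair. reflexivity. }
    split; intro Hc; induction Hc; try (apply t_step; apply HV; auto; fail);
      try (apply t_step; apply <- HV; auto; fail); eapply t_trans; eauto. }
  rewrite Hio.
  split; [|split; [|split; [|split]]].
  - exists (enc (RComp (Cce Cs Fs HC) [RProj 0; Kc p])). intro k. rewrite W_Cce, Rl_ce. reflexivity.
  - intro Hm. apply Rl_metr; [apply EM|apply EH|apply EF]; auto.
  - intros [Hh Hm]. split.
    + apply Rl_Haus; [apply EH|apply EF]; auto.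
    + apply Rl_notmetr. rewrite <- EM. auto.
  - intros [Hf Hh]. split.
    + apply Rl_T1. apply EF; auto.
    + apply Rl_notHaus. rewrite <- EH. auto.
  - intro Hf. apply Rl_notT1. rewrite <- EF. auto.
Qed.
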